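(* Let $R=\{r\in\mathbb{Z}: 1<r\le 5040,\ G(r)\ge e^\gamma\}$. If $r\in R$ and $p\ge 11$ is prime, then $G(pr)<e^\gamma$.
   Context: For a positive integer $n$, $\sigma(n)=\sum_{d\mid n} d$. For integers $n>1$ define $G(n)=\dfrac{\sigma(n)}{n\log\log n}$ (natural logarithms). $\gamma$ is the Euler–Mascheroni constant, $e^\gamma=1.78107\ldots$. *)

(* Defs.v *)
From Stdlib Require Import Reals Lra Lia ZArith Znumtheory List Arith.
Open Scope R_scope.

Definition sigma (n : nat) : nat :=
  fold_right Nat.add 0%nat
    (filter (fun d => Nat.eqb (Nat.modulo n d) 0) (seq 1 n)).

Definition G (n : nat) : R :=
  INR (sigma n) / (INR n * ln (ln (INR n))).

(* Sequence H_{n+1} - ln (n+1), whose limit is the Euler–Mascheroni constant. *)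
Definition harm_minus_log (n : nat) : R :=
  sum_f_R0 (fun k => / INR (S k)) n - ln (INR (S n)).

(* Main.v *)
Require Import Defs.
From Stdlib Require Import Reals ZArith Znumtheory.
From Stdlib Require Import Lra Lia List Arith.
Open Scope R_scope.
Local Open Scope nat_scope.

Definition sumL (l : list nat) := fold_right Nat.add 0%nat l.
Definition divs (n : nat) := filter (fun d => Nat.eqb (Nat.modulo n d) 0) (seq 1 n).

Lemma sumL_app l m : sumL (l ++ m) = (sumL l + sumL m)%nat.
Proof. induction l; simpl; lia. Qed.

Lemma sumL_map p l : sumL (map (Nat.mul p) l) = (p * sumL l)%nat.
Proof. induction l; simpl; lia. Qed.

Lemma sum_incl : forall l m, NoDup l -> incl l m -> (sumL l <= sumL m)%nat.
Proof.
  induction l as [|a l IH]; intros m Hn Hi; simpl. lia.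
  inversion Hn; subst.
  assert (Ha : In a m) by (apply Hi; left; auto).
  destruct (in_split _ _ Ha) as [m1 [m2 ->]].
  rewrite sumL_app; simpl.
  assert (sumL l <= sumL (m1 ++ m2))%nat.
  { apply IH; auto. intros x Hx.
    assert (Hx' : In x (m1 ++ a :: m2)) by (apply Hi; right; auto).
    apply in_app_or in Hx'. apply in_or_app. destruct Hx' as [|[|]]; auto.
    subst; contradiction. }
  rewrite sumL_app in H; lia.
Qed.

Lemma in_divs d n : In d (divs n) <-> (1 <= d <= n /\ Nat.modulo n d = 0)%nat.
Proof.
  unfold divs. rewrite filter_In, in_seq, Nat.eqb_eq. lia.
Qed.

Lemma nat_div_Z a b : Nat.divide a b -> Z.divide (Z.of_nat a) (Z.of_nat b).
Proof. intros [k ->]. exists (Z.of_nat k). lia. Qed.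

Lemma Z_div_nat a b : (a <> 0)%nat -> Z.divide (Z.of_nat a) (Z.of_nat b) -> Nat.divide a b.
Proof.
  intros Ha H. apply Nat.Lcm0.mod_divide; auto.
  apply Z.mod_divide in H; [|lia].
  rewrite <- Nat2Z.inj_mod in H. lia.
Qed.

Lemma divs_pr p r : prime (Z.of_nat p) -> (1 <= r)%nat ->
  incl (divs (p * r)) (divs r ++ map (Nat.mul p) (divs r)).
Proof.
  intros Hp Hr d Hd. apply in_divs in Hd. destruct Hd as [Hd1 Hd2].
  assert (Hp1 : (1 < Z.of_nat p)%Z) by (destruct Hp; auto).
  assert (Hdiv : Nat.divide d (p * r)) by (apply Nat.Lcm0.mod_divide; lia).
  apply in_or_app.
  destruct (Nat.eq_dec (Nat.modulo r d) 0) as [E|E].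
  - left. apply in_divs. split; [|auto]. split; [lia|].
    apply Nat.divide_pos_le; [lia|]. apply Nat.Lcm0.mod_divide; lia.
  - right.
    assert (Hpd : Nat.divide p d).
    { apply Z_div_nat; [lia|].
      destruct (Znumtheory.Zdivide_dec (Z.of_nat p) (Z.of_nat d)) as [|Hn]; auto.
      exfalso. apply prime_rel_prime with (a := Z.of_nat d) in Hn; auto.
      apply Zgcd_1_rel_prime in Hn.
      assert (Z.divide (Z.of_nat d) (Z.of_nat r)).
      { apply Z.gauss with (m := Z.of_nat p).
        rewrite <- Nat2Z.inj_mul. apply nat_div_Z; auto.
        rewrite Z.gcd_comm; auto. }
      apply Z_div_nat in H; [|lia]. apply Nat.Lcm0.mod_divide in H; lia. }
    destruct Hpd as [e He]. subst d.
    apply in_map_iff. exists e. split; [lia|].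
    apply in_divs.
    assert (Hdr : Nat.divide e r).
    { apply Nat.mul_divide_cancel_l with (p := p); [lia|].
      replace (p * e)%nat with (e * p)%nat by lia. auto. }
    split; [|apply Nat.Lcm0.mod_divide; auto; lia].
    split; [lia|]. apply Nat.divide_pos_le; auto; lia.
Qed.

Lemma sigma_pr p r : prime (Z.of_nat p) -> (1 <= r)%nat ->
  (Defs.sigma (p * r) <= (p + 1) * Defs.sigma r)%nat.
Proof.
  intros Hp Hr.
  change (sumL (divs (p * r)) <= (p + 1) * sumL (divs r))%nat.
  eapply Nat.le_trans.
  apply sum_incl. apply NoDup_filter, seq_NoDup. apply divs_pr; auto.
  rewrite sumL_app, sumL_map. lia.
Qed.


Definition small (n : nat) := filter (fun d => Nat.eqb (Nat.modulo n d) 0) (seq 1 (Nat.sqrt n)).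

Lemma sumL_map2 n l : sumL (map (fun d => d + n / d)%nat l) = (sumL l + sumL (map (fun d => n / d)%nat l))%nat.
Proof. induction l; simpl; lia. Qed.

Lemma in_small d n : In d (small n) <-> (1 <= d /\ d * d <= n /\ Nat.modulo n d = 0)%nat.
Proof.
  unfold small. rewrite filter_In, in_seq, Nat.eqb_eq.
  pose proof (Nat.sqrt_le_square n d). lia.
Qed.

Lemma sigma_ub n : (Defs.sigma n <= sumL (map (fun d => d + n / d)%nat (small n)))%nat.
Proof.
  change (sumL (divs n) <= sumL (map (fun d => d + n / d)%nat (small n)))%nat.
  rewrite sumL_map2, <- sumL_app.
  apply sum_incl. apply NoDup_filter, seq_NoDup.
  intros d Hd. apply in_divs in Hd as [Hd1 Hd2]. apply in_or_app.
  assert (Hn : n = (d * (n / d))%nat) by (apply Nat.Div0.div_exact; lia).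
  destruct (Nat.le_gt_cases (d * d) n) as [Hle|Hgt].
  - left. apply in_small. lia.
  - right. apply in_map_iff.
    remember (n / d)%nat as e eqn:Ee. clear Ee.
    exists e.
    assert (He : (1 <= e)%nat) by nia.
    split.
    + rewrite Hn. apply Nat.div_mul. lia.
    + apply in_small. split; [lia|]. split; [nia|].
      rewrite Hn. apply Nat.Div0.mod_mul.
Qed.

Fixpoint ubZ_go (n : Z) (k : nat) (d acc : Z) : Z :=
  match k with
  | O => acc
  | S k' => ubZ_go n k' (d + 1) (if Z.eqb (n mod d) 0 then (acc + (d + n / d))%Z else acc)
  end.
Definition ubZ (n : Z) := ubZ_go n (Nat.sqrt (Z.to_nat n)) 1 0.

Lemma ubZ_go_spec n : forall k s acc,
  ubZ_go (Z.of_nat n) k (Z.of_nat s) acc =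
  (acc + Z.of_nat (sumL (map (fun d => d + n / d)%nat
      (filter (fun d => Nat.eqb (Nat.modulo n d) 0) (seq s k)))))%Z.
Proof.
  induction k as [|k IH]; intros s acc; simpl. lia.
  rewrite <- Nat2Z.inj_mod.
  replace (Z.of_nat s + 1)%Z with (Z.of_nat (S s)) by lia.
  rewrite IH.
  destruct (Nat.eqb (n mod s) 0) eqn:E.
  - apply Nat.eqb_eq in E. rewrite E. simpl. rewrite <- Nat2Z.inj_div. lia.
  - apply Nat.eqb_neq in E.
    destruct (Z.eqb (Z.of_nat (n mod s)) 0) eqn:E2. apply Z.eqb_eq in E2; lia. lia.
Qed.

Lemma ubZ_spec n : (Z.of_nat (Defs.sigma n) <= ubZ (Z.of_nat n))%Z.
Proof.
  unfold ubZ. rewrite Nat2Z.id. change 1%Z with (Z.of_nat 1).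
  rewrite ubZ_go_spec. pose proof (sigma_ub n). unfold small in H. lia.
Qed.

Fixpoint sigZ_go (n : Z) (k : nat) (d acc : Z) : Z :=
  match k with
  | O => acc
  | S k' => sigZ_go n k' (d + 1) (if Z.eqb (n mod d) 0 then (acc + d)%Z else acc)
  end.
Definition sigZ (n : Z) := sigZ_go n (Z.to_nat n) 1 0.

Lemma sigZ_go_spec n : forall k s acc,
  sigZ_go (Z.of_nat n) k (Z.of_nat s) acc =
  (acc + Z.of_nat (sumL (filter (fun d => Nat.eqb (Nat.modulo n d) 0) (seq s k))))%Z.
Proof.
  induction k as [|k IH]; intros s acc; simpl. lia.
  rewrite <- Nat2Z.inj_mod.
  replace (Z.of_nat s + 1)%Z with (Z.of_nat (S s)) by lia.
  rewrite IH.
  destruct (Nat.eqb (n mod s) 0) eqn:E.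
  - apply Nat.eqb_eq in E. rewrite E. simpl. lia.
  - apply Nat.eqb_neq in E.
    destruct (Z.eqb (Z.of_nat (n mod s)) 0) eqn:E2. apply Z.eqb_eq in E2; lia. lia.
Qed.

Lemma sigZ_spec n : (Z.of_nat (Defs.sigma n) <= sigZ (Z.of_nat n))%Z.
Proof.
  unfold sigZ. rewrite Nat2Z.id. change 1%Z with (Z.of_nat 1).
  rewrite sigZ_go_spec. change (Defs.sigma n) with (sumL (divs n)). unfold divs. lia.
Qed.

Fixpoint chk (f : Z -> Z) (lo : Z) (len : nat) (P1 P2 : Z) : bool :=
  match len with
  | O => true
  | S len' =>
    ((f lo * 1000000 <? P1 * lo)%Z || (12 * f lo * 1000000 <? P2 * lo)%Z)
    && chk f (lo + 1) len' P1 P2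
  end.

Lemma chk_spec f (Hf : forall n, (Z.of_nat (Defs.sigma n) <= f (Z.of_nat n))%Z) :
  forall len lo P1 P2, chk f lo len P1 P2 = true ->
  forall r : nat, (lo <= Z.of_nat r < lo + Z.of_nat len)%Z ->
  (Z.of_nat (Defs.sigma r) * 1000000 < P1 * Z.of_nat r)%Z \/
  (12 * Z.of_nat (Defs.sigma r) * 1000000 < P2 * Z.of_nat r)%Z.
Proof.
  induction len as [|len IH]; intros lo P1 P2 H r Hr; cbn [chk] in H. lia.
  apply andb_prop in H as [H1 H2].
  destruct (Z.eq_dec lo (Z.of_nat r)) as [->|Hne].
  - pose proof (Hf r).
    apply Bool.orb_prop in H1 as [H1|H1]; apply Z.ltb_lt in H1; [left|right]; revert H H1; lia.
  - apply IH with (lo := (lo + 1)%Z); auto. lia.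
Qed.

Lemma chk_all :
  chk sigZ 3 9 (1755*94) (11*1755*1251) = true /\
  chk sigZ 12 36 (1755*910) (11*1755*1585) = true /\
  chk ubZ 48 72 (1755*1353) (11*1755*1835) = true /\
  chk ubZ 120 240 (1755*1566) (11*1755*1972) = true /\
  chk ubZ 360 480 (1755*1772) (11*1755*2114) = true /\
  chk ubZ 840 1680 (1755*1907) (11*1755*2211) = true /\
  chk ubZ 2520 2520 (1755*2058) (11*1755*2325) = true /\
  chk ubZ 5040 1 (1755*2143) (11*1755*2390) = true.
Proof. vm_compute. repeat split. Qed.

Local Open Scope R_scope.

Lemma up_base y u : 0 <= y < 1 -> 1 <= u * (1 - y) -> exp y <= u.
Proof.
  intros Hy Hu.
  pose proof (exp_ineq1_le (- y)).
  assert (E : exp y * exp (- y) = 1) by (rewrite <- exp_plus; replace (y + - y) with 0 by ring; apply exp_0).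
  pose proof (exp_pos y). nra.
Qed.

Lemma up_step a b u v : b = 2 * a -> exp a <= u -> u * u <= v -> exp b <= v.
Proof.
  intros -> H1 H2. replace (2 * a) with (a + a) by ring. rewrite exp_plus.
  pose proof (exp_pos a). nra.
Qed.

Lemma lo_base y u : u <= 1 + y -> u <= exp y.
Proof. intros. pose proof (exp_ineq1_le y). lra. Qed.

Lemma lo_step a b u v : b = 2 * a -> 0 <= u -> u <= exp a -> v <= u * u -> v <= exp b.
Proof.
  intros -> H0 H1 H2. replace (2 * a) with (a + a) by ring. rewrite exp_plus. nra.
Qed.

Lemma ln_le' x y : 0 < x -> x <= y -> ln x <= ln y.
Proof. intros H1 H2. destruct (Rle_lt_or_eq_dec _ _ H2) as [H|H]. left; apply ln_increasing; auto. subst; lra. Qed.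

Lemma lnln_lb t u d : exp d <= u -> exp u <= t -> d <= ln (ln t).
Proof.
  intros H1 H2. pose proof (exp_pos d). pose proof (exp_pos u).
  assert (u <= ln t). { rewrite <- (ln_exp u). apply ln_le'; lra. }
  rewrite <- (ln_exp d). apply ln_le'; lra.
Qed.

Lemma ln_ub t c : 0 < t -> t <= exp c -> ln t <= c.
Proof. intros. rewrite <- (ln_exp c). apply ln_le'; lra. Qed.

Definition hf := fun k => / INR (S k).

Lemma hstep n q q' : sum_f_R0 hf n >= q -> q + / INR (S (S n)) >= q' -> sum_f_R0 hf (S n) >= q'.
Proof. intros. simpl sum_f_R0. unfold hf at 2. lra. Qed.

Lemma test : / INR 41 >= 0.0243.
Proof. rewrite INR_IZR_INZ. simpl Z.of_nat. lra. Qed.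
Lemma exp_g : (351/200) <= exp (563/1000).
Proof.
  apply (lo_step (563/2000) (563/1000) (828197497639813624867/625000000000000000000) (351/200)); [lra|lra| |lra].
  apply (lo_step (563/4000) (563/2000) (2302273655518563066709/2000000000000000000000) (828197497639813624867/625000000000000000000)); [lra|lra| |lra].
  apply (lo_step (563/8000) (563/4000) (10729104472225450062679/10000000000000000000000) (2302273655518563066709/2000000000000000000000)); [lra|lra| |lra].
  apply (lo_step (563/16000) (563/8000) (2071627811381711496517/2000000000000000000000) (10729104472225450062679/10000000000000000000000)); [lra|lra| |lra].
  apply (lo_step (563/32000) (563/16000) (10177494316828949957881/10000000000000000000000) (2071627811381711496517/2000000000000000000000)); [lra|lra| |lra].
  apply (lo_step (563/64000) (563/32000) (10088356812102231526563/10000000000000000000000) (10177494316828949957881/10000000000000000000000)); [lra|lra| |lra].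
  apply (lo_step (563/128000) (563/64000) (10044081248228845110273/10000000000000000000000) (10088356812102231526563/10000000000000000000000)); [lra|lra| |lra].
  apply (lo_step (563/256000) (563/128000) (10022016388047290112191/10000000000000000000000) (10044081248228845110273/10000000000000000000000)); [lra|lra| |lra].
  apply (lo_step (563/512000) (563/256000) (10011002141667581379577/10000000000000000000000) (10022016388047290112191/10000000000000000000000)); [lra|lra| |lra].
  apply (lo_step (563/1024000) (563/512000) (5002749779288281918473/5000000000000000000000) (10011002141667581379577/10000000000000000000000)); [lra|lra| |lra].
  apply (lo_step (563/2048000) (563/1024000) (5001374700663949412941/5000000000000000000000) (5002749779288281918473/5000000000000000000000)); [lra|lra| |lra].
  apply (lo_step (563/4096000) (563/2048000) (2500343651546710241967/2500000000000000000000) (5001374700663949412941/5000000000000000000000)); [lra|lra| |lra].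
  apply (lo_step (563/8192000) (563/4096000) (5000343639737883296717/5000000000000000000000) (2500343651546710241967/2500000000000000000000)); [lra|lra| |lra].
  apply (lo_step (563/16384000) (563/8192000) (10000343633833672714487/10000000000000000000000) (5000343639737883296717/5000000000000000000000)); [lra|lra| |lra].
  apply (lo_step (563/32768000) (563/16384000) (10000171815440809072223/10000000000000000000000) (10000343633833672714487/10000000000000000000000)); [lra|lra| |lra].
  apply (lo_step (563/65536000) (563/32768000) (2500021476837850221219/2500000000000000000000) (10000171815440809072223/10000000000000000000000)); [lra|lra| |lra].
  apply (lo_step (563/131072000) (563/65536000) (10000042953583449925879/10000000000000000000000) (2500021476837850221219/2500000000000000000000)); [lra|lra| |lra].
  apply (lo_step (563/262144000) (563/131072000) (10000021476768662383331/10000000000000000000000) (10000042953583449925879/10000000000000000000000)); [lra|lra| |lra].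
  apply (lo_step (563/524288000) (563/262144000) (2000002147675713110591/2000000000000000000000) (10000021476768662383331/10000000000000000000000)); [lra|lra| |lra].
  apply (lo_step (563/1048576000) (563/524288000) (5000002684593920683787/5000000000000000000000) (2000002147675713110591/2000000000000000000000)); [lra|lra| |lra].
  apply (lo_step (563/2097152000) (563/1048576000) (5000001342296780165829/5000000000000000000000) (5000002684593920683787/5000000000000000000000)); [lra|lra| |lra].
  apply (lo_step (563/4194304000) (563/2097152000) (10000001342296690077809/10000000000000000000000) (5000001342296780165829/5000000000000000000000)); [lra|lra| |lra].
  apply (lo_step (563/8388608000) (563/4194304000) (10000000671148322516901/10000000000000000000000) (10000001342296690077809/10000000000000000000000)); [lra|lra| |lra].
  apply (lo_step (563/16777216000) (563/8388608000) (200000006711483112559/200000000000000000000) (10000000671148322516901/10000000000000000000000)); [lra|lra| |lra].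
  apply (lo_step (563/33554432000) (563/16777216000) (200000003355741528127/200000000000000000000) (200000006711483112559/200000000000000000000)); [lra|lra| |lra].
  apply (lo_step (563/67108864000) (563/33554432000) (10000000083893537851269/10000000000000000000000) (200000003355741528127/200000000000000000000)); [lra|lra| |lra].
  apply (lo_step (563/134217728000) (563/67108864000) (5000000020973384418829/5000000000000000000000) (10000000083893537851269/10000000000000000000000)); [lra|lra| |lra].
  apply (lo_step (563/268435456000) (563/134217728000) (2000000004194676879367/2000000000000000000000) (5000000020973384418829/5000000000000000000000)); [lra|lra| |lra].
  apply (lo_step (563/536870912000) (563/268435456000) (10000000010486692192919/10000000000000000000000) (2000000004194676879367/2000000000000000000000)); [lra|lra| |lra].
  apply (lo_step (563/1073741824000) (563/536870912000) (2000000001048669219017/2000000000000000000000) (10000000010486692192919/10000000000000000000000)); [lra|lra| |lra].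
  apply lo_base; lra.
Qed.

Lemma exp_41 : (41/1) <= exp (185679/50000).
Proof.
  apply (lo_step (185679/100000) (185679/50000) (64031496158621137000887/10000000000000000000000) (41/1)); [lra|lra| |lra].
  apply (lo_step (185679/200000) (185679/100000) (25304445490589422714683/10000000000000000000000) (64031496158621137000887/10000000000000000000000)); [lra|lra| |lra].
  apply (lo_step (185679/400000) (185679/200000) (7953685543600121282501/5000000000000000000000) (25304445490589422714683/10000000000000000000000)); [lra|lra| |lra].
  apply (lo_step (185679/800000) (185679/400000) (6306221350222382291771/5000000000000000000000) (7953685543600121282501/5000000000000000000000)); [lra|lra| |lra].
  apply (lo_step (185679/1600000) (185679/800000) (11230513211979568560229/10000000000000000000000) (6306221350222382291771/5000000000000000000000)); [lra|lra| |lra].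
  apply (lo_step (185679/3200000) (185679/1600000) (21194823152816886441/20000000000000000000) (11230513211979568560229/10000000000000000000000)); [lra|lra| |lra].
  apply (lo_step (185679/6400000) (185679/3200000) (102943730146174726713/100000000000000000000) (21194823152816886441/20000000000000000000)); [lra|lra| |lra].
  apply (lo_step (185679/12800000) (185679/6400000) (10146118969644241595803/10000000000000000000000) (102943730146174726713/100000000000000000000)); [lra|lra| |lra].
  apply (lo_step (185679/25600000) (185679/12800000) (629549658288945612653/625000000000000000000) (10146118969644241595803/10000000000000000000000)); [lra|lra| |lra].
  apply (lo_step (185679/51200000) (185679/25600000) (5018165634129449946939/5000000000000000000000) (629549658288945612653/625000000000000000000)); [lra|lra| |lra].
  apply (lo_step (185679/102400000) (185679/51200000) (5009074582260404887961/5000000000000000000000) (5018165634129449946939/5000000000000000000000)); [lra|lra| |lra].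
  apply (lo_step (185679/204800000) (185679/102400000) (1251133808573797804031/1250000000000000000000) (5009074582260404887961/5000000000000000000000)); [lra|lra| |lra].
  apply (lo_step (185679/409600000) (185679/204800000) (10004534206343832793447/10000000000000000000000) (1251133808573797804031/1250000000000000000000)); [lra|lra| |lra].
  apply (lo_step (185679/819200000) (185679/409600000) (10002266846242322080237/10000000000000000000000) (10004534206343832793447/10000000000000000000000)); [lra|lra| |lra].
  apply (lo_step (185679/1638400000) (185679/819200000) (5000566679448020839139/5000000000000000000000) (10002266846242322080237/10000000000000000000000)); [lra|lra| |lra].
  apply (lo_step (185679/3276800000) (185679/1638400000) (10000566663392650810613/10000000000000000000000) (5000566679448020839139/5000000000000000000000)); [lra|lra| |lra].
  apply (lo_step (185679/6553600000) (185679/3276800000) (2500070831920649154757/2500000000000000000000) (10000566663392650810613/10000000000000000000000)); [lra|lra| |lra].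
  apply (lo_step (185679/13107200000) (185679/6553600000) (10000141662837880327699/10000000000000000000000) (2500070831920649154757/2500000000000000000000)); [lra|lra| |lra].
  apply (lo_step (185679/26214400000) (185679/13107200000) (5000035415584043722609/5000000000000000000000) (10000141662837880327699/10000000000000000000000)); [lra|lra| |lra].
  apply (lo_step (185679/52428800000) (185679/26214400000) (10000035415521330765053/10000000000000000000000) (5000035415584043722609/5000000000000000000000)); [lra|lra| |lra].
  apply (lo_step (185679/104857600000) (185679/52428800000) (100000177077449871709/100000000000000000000) (10000035415521330765053/10000000000000000000000)); [lra|lra| |lra].
  apply (lo_step (185679/209715200000) (185679/104857600000) (5000004426934287018007/5000000000000000000000) (100000177077449871709/100000000000000000000)); [lra|lra| |lra].
  apply (lo_step (185679/419430400000) (185679/209715200000) (5000002213466653565541/5000000000000000000000) (5000004426934287018007/5000000000000000000000)); [lra|lra| |lra].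
  apply (lo_step (185679/838860800000) (185679/419430400000) (1250000276683301074233/1250000000000000000000) (5000002213466653565541/5000000000000000000000)); [lra|lra| |lra].
  apply (lo_step (185679/1677721600000) (185679/838860800000) (500000055336657152701/500000000000000000000) (1250000276683301074233/1250000000000000000000)); [lra|lra| |lra].
  apply (lo_step (185679/3355443200000) (185679/1677721600000) (10000000553366556216283/10000000000000000000000) (500000055336657152701/500000000000000000000)); [lra|lra| |lra].
  apply (lo_step (185679/6710886400000) (185679/3355443200000) (500000013834163714023/500000000000000000000) (10000000553366556216283/10000000000000000000000)); [lra|lra| |lra].
  apply (lo_step (185679/13421772800000) (185679/6710886400000) (1000000013834163618331/1000000000000000000000) (500000013834163714023/500000000000000000000)); [lra|lra| |lra].
  apply (lo_step (185679/26843545600000) (185679/13421772800000) (400000002766832714097/400000000000000000000) (1000000013834163618331/1000000000000000000000)); [lra|lra| |lra].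
  apply (lo_step (185679/53687091200000) (185679/26843545600000) (2000000006917081773281/2000000000000000000000) (400000002766832714097/400000000000000000000)); [lra|lra| |lra].
  apply lo_base; lra.
Qed.

Lemma H40 : sum_f_R0 hf 39 >= (2139271519468181/500000000000000).
Proof.
  apply (hstep 38 (2126771519468181/500000000000000)); [|rewrite INR_IZR_INZ; simpl Z.of_nat; lra].
  apply (hstep 37 (4227902013295337/1000000000000000)); [|rewrite INR_IZR_INZ; simpl Z.of_nat; lra].
  apply (hstep 36 (4201586223821653/1000000000000000)); [|rewrite INR_IZR_INZ; simpl Z.of_nat; lra].
  apply (hstep 35 (2087279598397313/500000000000000)); [|rewrite INR_IZR_INZ; simpl Z.of_nat; lra].
  apply (hstep 34 (4146781419016849/1000000000000000)); [|rewrite INR_IZR_INZ; simpl Z.of_nat; lra].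
  apply (hstep 33 (4118209990445421/1000000000000000)); [|rewrite INR_IZR_INZ; simpl Z.of_nat; lra].
  apply (hstep 32 (4088798225739539/1000000000000000)); [|rewrite INR_IZR_INZ; simpl Z.of_nat; lra].
  apply (hstep 31 (4058495195436509/1000000000000000)); [|rewrite INR_IZR_INZ; simpl Z.of_nat; lra].
  apply (hstep 30 (4027245195436509/1000000000000000)); [|rewrite INR_IZR_INZ; simpl Z.of_nat; lra].
  apply (hstep 29 (199749356546019/50000000000000)); [|rewrite INR_IZR_INZ; simpl Z.of_nat; lra].
  apply (hstep 28 (3961653797587047/1000000000000000)); [|rewrite INR_IZR_INZ; simpl Z.of_nat; lra].
  apply (hstep 27 (1963585519483179/500000000000000)); [|rewrite INR_IZR_INZ; simpl Z.of_nat; lra].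
  apply (hstep 26 (3891456753252073/1000000000000000)); [|rewrite INR_IZR_INZ; simpl Z.of_nat; lra].
  apply (hstep 25 (963604929053759/250000000000000)); [|rewrite INR_IZR_INZ; simpl Z.of_nat; lra].
  apply (hstep 24 (1907979088876749/500000000000000)); [|rewrite INR_IZR_INZ; simpl Z.of_nat; lra].
  apply (hstep 23 (1887979088876749/500000000000000)); [|rewrite INR_IZR_INZ; simpl Z.of_nat; lra].
  apply (hstep 22 (233393219442927/62500000000000)); [|rewrite INR_IZR_INZ; simpl Z.of_nat; lra].
  apply (hstep 21 (3690813250217267/1000000000000000)); [|rewrite INR_IZR_INZ; simpl Z.of_nat; lra].
  apply (hstep 20 (1822679352381361/500000000000000)); [|rewrite INR_IZR_INZ; simpl Z.of_nat; lra].
  apply (hstep 19 (143909586285747/40000000000000)); [|rewrite INR_IZR_INZ; simpl Z.of_nat; lra].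
  apply (hstep 18 (141909586285747/40000000000000)); [|rewrite INR_IZR_INZ; simpl Z.of_nat; lra].
  apply (hstep 17 (3495108078196307/1000000000000000)); [|rewrite INR_IZR_INZ; simpl Z.of_nat; lra].
  apply (hstep 16 (214972032665047/62500000000000)); [|rewrite INR_IZR_INZ; simpl Z.of_nat; lra].
  apply (hstep 15 (845182248307247/250000000000000)); [|rewrite INR_IZR_INZ; simpl Z.of_nat; lra].
  apply (hstep 14 (829557248307247/250000000000000)); [|rewrite INR_IZR_INZ; simpl Z.of_nat; lra].
  apply (hstep 13 (1625781163281161/500000000000000)); [|rewrite INR_IZR_INZ; simpl Z.of_nat; lra].
  apply (hstep 12 (3180133755133751/1000000000000000)); [|rewrite INR_IZR_INZ; simpl Z.of_nat; lra].
  apply (hstep 11 (124128427128427/40000000000000)); [|rewrite INR_IZR_INZ; simpl Z.of_nat; lra].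
  apply (hstep 10 (1509938672438671/500000000000000)); [|rewrite INR_IZR_INZ; simpl Z.of_nat; lra].
  apply (hstep 9 (732242063492063/250000000000000)); [|rewrite INR_IZR_INZ; simpl Z.of_nat; lra].
  apply (hstep 8 (707242063492063/250000000000000)); [|rewrite INR_IZR_INZ; simpl Z.of_nat; lra].
  apply (hstep 7 (2717857142857141/1000000000000000)); [|rewrite INR_IZR_INZ; simpl Z.of_nat; lra].
  apply (hstep 6 (2592857142857141/1000000000000000)); [|rewrite INR_IZR_INZ; simpl Z.of_nat; lra].
  apply (hstep 5 (2449999999999999/1000000000000000)); [|rewrite INR_IZR_INZ; simpl Z.of_nat; lra].
  apply (hstep 4 (2283333333333333/1000000000000000)); [|rewrite INR_IZR_INZ; simpl Z.of_nat; lra].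
  apply (hstep 3 (2083333333333333/1000000000000000)); [|rewrite INR_IZR_INZ; simpl Z.of_nat; lra].
  apply (hstep 2 (1833333333333333/1000000000000000)); [|rewrite INR_IZR_INZ; simpl Z.of_nat; lra].
  apply (hstep 1 (3/2)); [|rewrite INR_IZR_INZ; simpl Z.of_nat; lra].
  apply (hstep 0 (1/1)); [|rewrite INR_IZR_INZ; simpl Z.of_nat; lra].
  simpl. unfold hf. rewrite INR_IZR_INZ; simpl Z.of_nat; lra.
Qed.

Lemma lnln_a_3 : (47/500) <= ln (ln 3).
Proof.
  apply (lnln_lb _ (54929301/50000000)).
  - apply (up_step (47/1000) (47/500) (163769063919043812331/156250000000000000000)); [lra| |lra].
  apply (up_step (47/2000) (47/1000) (10237783007477157888379/10000000000000000000000)); [lra| |lra].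
  apply (up_step (47/4000) (47/2000) (10118193024190217477499/10000000000000000000000)); [lra| |lra].
  apply (up_step (47/8000) (47/4000) (314341341143441698197/312500000000000000000)); [lra| |lra].
  apply (up_step (47/16000) (47/8000) (100294181868093097987/100000000000000000000)); [lra| |lra].
  apply (up_step (47/32000) (47/16000) (500734914570806361469/500000000000000000000)); [lra| |lra].
  apply (up_step (47/64000) (47/32000) (5003673223596872545217/5000000000000000000000)); [lra| |lra].
  apply (up_step (47/128000) (47/64000) (2000734509843197070697/2000000000000000000000)); [lra| |lra].
  apply (up_step (47/256000) (47/128000) (1000183610604372248703/1000000000000000000000)); [lra| |lra].
  apply (up_step (47/512000) (47/256000) (10000918010884662025617/10000000000000000000000)); [lra| |lra].
  apply (up_step (47/1024000) (47/512000) (10000458994908514710687/10000000000000000000000)); [lra| |lra].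
  apply (up_step (47/2048000) (47/1024000) (500011474741043185759/500000000000000000000)); [lra| |lra].
  apply (up_step (47/4096000) (47/2048000) (5000057373376045500909/5000000000000000000000)); [lra| |lra].
  apply (up_step (47/8192000) (47/4096000) (250001434330286530781/250000000000000000000)); [lra| |lra].
  apply (up_step (47/16384000) (47/8192000) (2500007171641146166559/2500000000000000000000)); [lra| |lra].
  apply (up_step (47/32768000) (47/16384000) (5000007171636002930263/5000000000000000000000)); [lra| |lra].
  apply (up_step (47/65536000) (47/32768000) (10000007171633431313959/10000000000000000000000)); [lra| |lra].
  apply (up_step (47/131072000) (47/65536000) (5000001792908036376567/5000000000000000000000)); [lra| |lra].
  apply (up_step (47/262144000) (47/131072000) (5000000896453937825317/5000000000000000000000)); [lra| |lra].
  apply (up_step (47/524288000) (47/262144000) (10000000896453897643837/10000000000000000000000)); [lra| |lra].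
  apply (up_step (47/1048576000) (47/524288000) (10000000448226938776549/10000000000000000000000)); [lra| |lra].
  apply (up_step (47/2097152000) (47/1048576000) (2500000056028366719233/2500000000000000000000)); [lra| |lra].
  apply (up_step (47/4194304000) (47/2097152000) (1000000011205673281063/1000000000000000000000)); [lra| |lra].
  apply (up_step (47/8388608000) (47/4194304000) (2500000014007091562089/2500000000000000000000)); [lra| |lra].
  apply (up_step (47/16777216000) (47/8388608000) (5000000014007091542469/5000000000000000000000)); [lra| |lra].
  apply (up_step (47/33554432000) (47/16777216000) (10000000014007091532659/10000000000000000000000)); [lra| |lra].
  apply (up_step (47/67108864000) (47/33554432000) (10000000007003545763877/10000000000000000000000)); [lra| |lra].
  apply (up_step (47/134217728000) (47/67108864000) (400000000140070915253/400000000000000000000)); [lra| |lra].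
  apply (up_step (47/268435456000) (47/134217728000) (10000000001750886440509/10000000000000000000000)); [lra| |lra].
  apply (up_step (47/536870912000) (47/268435456000) (1250000000109430402527/1250000000000000000000)); [lra| |lra].
  apply up_base; lra.
  - apply (up_step (54929301/100000000) (54929301/50000000) (8660140294355743304143/5000000000000000000000)); [lra| |lra].
  apply (up_step (54929301/200000000) (54929301/100000000) (3290163425719865230503/2500000000000000000000)); [lra| |lra].
  apply (up_step (54929301/400000000) (54929301/200000000) (11471989235908243704183/10000000000000000000000)); [lra| |lra].
  apply (up_step (54929301/800000000) (54929301/400000000) (535536862314543285823/500000000000000000000)); [lra| |lra].
  apply (up_step (54929301/1600000000) (54929301/800000000) (10349269175304537278571/10000000000000000000000)); [lra| |lra].
  apply (up_step (54929301/3200000000) (54929301/1600000000) (10173135787604792055959/10000000000000000000000)); [lra| |lra].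
  apply (up_step (54929301/6400000000) (54929301/3200000000) (5043098201404765441403/5000000000000000000000)); [lra| |lra].
  apply (up_step (54929301/12800000000) (54929301/6400000000) (1255375715847247540837/1250000000000000000000)); [lra| |lra].
  apply (up_step (54929301/25600000000) (54929301/12800000000) (2004295958862161686287/2000000000000000000000)); [lra| |lra].
  apply (up_step (54929301/51200000000) (54929301/25600000000) (10010734136071544094513/10000000000000000000000)); [lra| |lra].
  apply (up_step (54929301/102400000000) (54929301/51200000000) (5002682814268646018561/5000000000000000000000)); [lra| |lra].
  apply (up_step (54929301/204800000000) (54929301/102400000000) (5001341227245270663647/5000000000000000000000)); [lra| |lra].
  apply (up_step (54929301/409600000000) (54929301/204800000000) (2500335284328201518403/2500000000000000000000)); [lra| |lra].
  apply (up_step (54929301/819200000000) (54929301/409600000000) (2000134109234958882047/2000000000000000000000)); [lra| |lra].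
  apply (up_step (54929301/1638400000000) (54929301/819200000000) (312510477108349483673/312500000000000000000)); [lra| |lra].
  apply (up_step (54929301/3276800000000) (54929301/1638400000000) (5000083816164280929907/5000000000000000000000)); [lra| |lra].
  apply (up_step (54929301/6553600000000) (54929301/3276800000000) (10000083815813026404243/10000000000000000000000)); [lra| |lra].
  apply (up_step (54929301/13107200000000) (54929301/6553600000000) (1250005238477337492339/1250000000000000000000)); [lra| |lra].
  apply (up_step (54929301/26214400000000) (54929301/13107200000000) (625001309617962293719/625000000000000000000)); [lra| |lra].
  apply (up_step (54929301/52428800000000) (54929301/26214400000000) (10000010476938210038039/10000000000000000000000)); [lra| |lra].
  apply (up_step (54929301/104857600000000) (54929301/52428800000000) (1000000523846773294181/1000000000000000000000)); [lra| |lra].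
  apply (up_step (54929301/209715200000000) (54929301/104857600000000) (2500000654808380862923/2500000000000000000000)); [lra| |lra].
  apply (up_step (54929301/419430400000000) (54929301/209715200000000) (5000000654808337985527/5000000000000000000000)); [lra| |lra].
  apply (up_step (54929301/838860800000000) (54929301/419430400000000) (1000000065480831654683/1000000000000000000000)); [lra| |lra].
  apply (up_step (54929301/1677721600000000) (54929301/838860800000000) (10000000327404152913741/10000000000000000000000)); [lra| |lra].
  apply (up_step (54929301/3355443200000000) (54929301/1677721600000000) (1250000020462759389619/1250000000000000000000)); [lra| |lra].
  apply (up_step (54929301/6710886400000000) (54929301/3355443200000000) (1250000010231379652937/1250000000000000000000)); [lra| |lra].
  apply (up_step (54929301/13421772800000000) (54929301/6710886400000000) (10000000040925518528003/10000000000000000000000)); [lra| |lra].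
  apply (up_step (54929301/26843545600000000) (54929301/13421772800000000) (2000000004092551848613/2000000000000000000000)); [lra| |lra].
  apply (up_step (54929301/53687091200000000) (54929301/26843545600000000) (5000000005115689808149/5000000000000000000000)); [lra| |lra].
  apply up_base; lra.
Qed.

Lemma lnln_b_3 : (1251/1000) <= ln (ln 33).
Proof.
  apply (lnln_lb _ (34951713/10000000)).
  - apply (up_step (1251/2000) (1251/1000) (18691803146617733784443/10000000000000000000000)); [lra| |lra].
  apply (up_step (1251/4000) (1251/2000) (13671796936254478243823/10000000000000000000000)); [lra| |lra].
  apply (up_step (1251/8000) (1251/4000) (58463229760795969567/50000000000000000000)); [lra| |lra].
  apply (up_step (1251/16000) (1251/8000) (2703313470557844165879/2500000000000000000000)); [lra| |lra].
  apply (up_step (1251/32000) (1251/16000) (2599669916815327232881/2500000000000000000000)); [lra| |lra].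
  apply (up_step (1251/64000) (1251/32000) (10197391660253767526429/10000000000000000000000)); [lra| |lra].
  apply (up_step (1251/128000) (1251/64000) (10098213535202039649147/10000000000000000000000)); [lra| |lra].
  apply (up_step (1251/256000) (1251/128000) (10048986782358726761401/10000000000000000000000)); [lra| |lra].
  apply (up_step (1251/512000) (1251/256000) (10024463468115750862747/10000000000000000000000)); [lra| |lra].
  apply (up_step (1251/1024000) (1251/512000) (1251528032803534957361/1250000000000000000000)); [lra| |lra].
  apply (up_step (1251/2048000) (1251/1024000) (5003055132223779437173/5000000000000000000000)); [lra| |lra].
  apply (up_step (1251/4096000) (1251/2048000) (5001527332837330119899/5000000000000000000000)); [lra| |lra].
  apply (up_step (1251/8192000) (1251/4096000) (1250190902027232664371/1250000000000000000000)); [lra| |lra].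
  apply (up_step (1251/16384000) (1251/8192000) (10000763578956289533073/10000000000000000000000)); [lra| |lra].
  apply (up_step (1251/32768000) (1251/16384000) (5000190891095131363223/5000000000000000000000)); [lra| |lra].
  apply (up_step (1251/65536000) (1251/32768000) (2000038177854639126433/2000000000000000000000)); [lra| |lra].
  apply (up_step (1251/131072000) (1251/65536000) (1250011930522639778827/1250000000000000000000)); [lra| |lra].
  apply (up_step (1251/262144000) (1251/131072000) (10000047721976689762349/10000000000000000000000)); [lra| |lra].
  apply (up_step (1251/524288000) (1251/262144000) (500001193047993880543/500000000000000000000)); [lra| |lra].
  apply (up_step (1251/1048576000) (1251/524288000) (5000005965236410998171/5000000000000000000000)); [lra| |lra].
  apply (up_step (1251/2097152000) (1251/1048576000) (62500037282716448731/62500000000000000000)); [lra| |lra].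
  apply (up_step (1251/4194304000) (1251/2097152000) (1000000298261687109831/1000000000000000000000)); [lra| |lra].
  apply (up_step (1251/8388608000) (1251/4194304000) (10000001491308324349129/10000000000000000000000)); [lra| |lra].
  apply (up_step (1251/16777216000) (1251/8388608000) (62500004660338339841/62500000000000000000)); [lra| |lra].
  apply (up_step (1251/33554432000) (1251/16777216000) (10000000372827060237279/10000000000000000000000)); [lra| |lra].
  apply (up_step (1251/67108864000) (1251/33554432000) (10000000186413528381139/10000000000000000000000)); [lra| |lra].
  apply (up_step (1251/134217728000) (1251/67108864000) (5000000046603381878097/5000000000000000000000)); [lra| |lra].
  apply (up_step (1251/268435456000) (1251/134217728000) (10000000046603381769503/10000000000000000000000)); [lra| |lra].
  apply (up_step (1251/536870912000) (1251/268435456000) (10000000023301690857603/10000000000000000000000)); [lra| |lra].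
  apply (up_step (1251/1073741824000) (1251/536870912000) (5000000005825422711007/5000000000000000000000)); [lra| |lra].
  apply up_base; lra.
  - apply (up_step (34951713/20000000) (34951713/10000000) (57407258259107119670577/10000000000000000000000)); [lra| |lra].
  apply (up_step (34951713/40000000) (34951713/20000000) (5989952955736960526643/2500000000000000000000)); [lra| |lra].
  apply (up_step (34951713/80000000) (34951713/40000000) (3869739318008695184233/2500000000000000000000)); [lra| |lra].
  apply (up_step (34951713/160000000) (34951713/80000000) (12441445764875873434887/10000000000000000000000)); [lra| |lra].
  apply (up_step (34951713/320000000) (34951713/160000000) (89232983192990690231/80000000000000000000)); [lra| |lra].
  apply (up_step (34951713/640000000) (34951713/320000000) (165020439216446922579/156250000000000000000)); [lra| |lra].
  apply (up_step (34951713/1280000000) (34951713/640000000) (2569205629889884252501/2500000000000000000000)); [lra| |lra].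
  apply (up_step (34951713/2560000000) (34951713/1280000000) (10137466409098250131673/10000000000000000000000)); [lra| |lra].
  apply (up_step (34951713/5120000000) (34951713/2560000000) (10068498601627876340673/10000000000000000000000)); [lra| |lra].
  apply (up_step (34951713/10240000000) (34951713/5120000000) (2508547712525600481113/2500000000000000000000)); [lra| |lra].
  apply (up_step (34951713/20480000000) (34951713/10240000000) (2504270209325263926357/2500000000000000000000)); [lra| |lra].
  apply (up_step (34951713/40960000000) (34951713/20480000000) (2001707354964861561187/2000000000000000000000)); [lra| |lra].
  apply (up_step (34951713/81920000000) (34951713/40960000000) (2501066869211055775987/2500000000000000000000)); [lra| |lra].
  apply (up_step (34951713/163840000000) (34951713/81920000000) (10002133510828688745367/10000000000000000000000)); [lra| |lra].
  apply (up_step (34951713/327680000000) (34951713/163840000000) (5000533349261028762349/5000000000000000000000)); [lra| |lra].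
  apply (up_step (34951713/655360000000) (34951713/327680000000) (10000533335038715586261/10000000000000000000000)); [lra| |lra].
  apply (up_step (34951713/1310720000000) (34951713/655360000000) (1250033332995484288959/1250000000000000000000)); [lra| |lra].
  apply (up_step (34951713/2621440000000) (34951713/1310720000000) (2000026666218615627353/2000000000000000000000)); [lra| |lra].
  apply (up_step (34951713/5242880000000) (34951713/2621440000000) (10000066665324325795009/10000000000000000000000)); [lra| |lra].
  apply (up_step (34951713/10485760000000) (34951713/5242880000000) (5000016666303304882167/5000000000000000000000)); [lra| |lra].
  apply (up_step (34951713/20971520000000) (34951713/10485760000000) (10000016666289416622021/10000000000000000000000)); [lra| |lra].
  apply (up_step (34951713/41943040000000) (34951713/20971520000000) (10000008333141236248867/10000000000000000000000)); [lra| |lra].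
  apply (up_step (34951713/83886080000000) (34951713/41943040000000) (10000004166569750109259/10000000000000000000000)); [lra| |lra].
  apply (up_step (34951713/167772160000000) (34951713/83886080000000) (10000002083284658050881/10000000000000000000000)); [lra| |lra].
  apply (up_step (34951713/335544320000000) (34951713/167772160000000) (10000001041642274774509/10000000000000000000000)); [lra| |lra].
  apply (up_step (34951713/671088640000000) (34951713/335544320000000) (5000000260410561912261/5000000000000000000000)); [lra| |lra].
  apply (up_step (34951713/1342177280000000) (34951713/671088640000000) (5000000130205279260789/5000000000000000000000)); [lra| |lra].
  apply (up_step (34951713/2684354560000000) (34951713/1342177280000000) (5000000065102639206559/5000000000000000000000)); [lra| |lra].
  apply (up_step (34951713/5368709120000000) (34951713/2684354560000000) (10000000065102638994641/10000000000000000000000)); [lra| |lra].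
  apply (up_step (34951713/10737418240000000) (34951713/5368709120000000) (10000000032551319444341/10000000000000000000000)); [lra| |lra].
  apply up_base; lra.
Qed.

Lemma lnln_a_12 : (91/100) <= ln (ln 12).
Proof.
  apply (lnln_lb _ (248461459/100000000)).
  - apply (up_step (91/200) (91/100) (3152346766675926468651/2000000000000000000000)); [lra| |lra].
  apply (up_step (91/400) (91/200) (12554574398751887735477/10000000000000000000000)); [lra| |lra].
  apply (up_step (91/800) (91/400) (87536872806839020237/78125000000000000000)); [lra| |lra].
  apply (up_step (91/1600) (91/800) (10585234867151221879087/10000000000000000000000)); [lra| |lra].
  apply (up_step (91/3200) (91/1600) (2057691411961591667379/2000000000000000000000)); [lra| |lra].
  apply (up_step (91/6400) (91/3200) (5071601586236826612407/5000000000000000000000)); [lra| |lra].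
  apply (up_step (91/12800) (91/6400) (5035673533022581981491/5000000000000000000000)); [lra| |lra].
  apply (up_step (91/25600) (91/12800) (2508902532239590107123/2500000000000000000000)); [lra| |lra].
  apply (up_step (91/51200) (91/25600) (500889462081165180019/500000000000000000000)); [lra| |lra].
  apply (up_step (91/102400) (91/51200) (10008890668612233172783/10000000000000000000000)); [lra| |lra].
  apply (up_step (91/204800) (91/102400) (5002222173347619606103/5000000000000000000000)); [lra| |lra].
  apply (up_step (91/409600) (91/204800) (312569435203117221603/312500000000000000000)); [lra| |lra].
  apply (up_step (91/819200) (91/409600) (5000555450772381718879/5000000000000000000000)); [lra| |lra].
  apply (up_step (91/1638400) (91/819200) (10000555435346960486223/10000000000000000000000)); [lra| |lra].
  apply (up_step (91/3276800) (91/1638400) (1250034714227154003629/1250000000000000000000)); [lra| |lra].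
  apply (up_step (91/6553600) (91/3276800) (10000138855944567347431/10000000000000000000000)); [lra| |lra].
  apply (up_step (91/13107200) (91/6553600) (2500017356932818295057/2500000000000000000000)); [lra| |lra].
  apply (up_step (91/26214400) (91/13107200) (10000034713805384175901/10000000000000000000000)); [lra| |lra].
  apply (up_step (91/52428800) (91/26214400) (5000008678443814505271/5000000000000000000000)); [lra| |lra].
  apply (up_step (91/104857600) (91/52428800) (10000008678440048739187/10000000000000000000000)); [lra| |lra].
  apply (up_step (91/209715200) (91/104857600) (10000004339219082928481/10000000000000000000000)); [lra| |lra].
  apply (up_step (91/419430400) (91/209715200) (10000002169609306104013/10000000000000000000000)); [lra| |lra].
  apply (up_step (91/838860800) (91/419430400) (2500000271201148552989/2500000000000000000000)); [lra| |lra].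
  apply (up_step (91/1677721600) (91/838860800) (5000000271201141197983/5000000000000000000000)); [lra| |lra].
  apply (up_step (91/3355443200) (91/1677721600) (62500001695007109503/62500000000000000000)); [lra| |lra].
  apply (up_step (91/6710886400) (91/3355443200) (312500004237517745027/312500000000000000000)); [lra| |lra].
  apply (up_step (91/13421772800) (91/6710886400) (2500000016950070922647/2500000000000000000000)); [lra| |lra].
  apply (up_step (91/26843545600) (91/13421772800) (10000000033900141787833/10000000000000000000000)); [lra| |lra].
  apply (up_step (91/53687091200) (91/26843545600) (10000000016950070879551/10000000000000000000000)); [lra| |lra].
  apply (up_step (91/107374182400) (91/53687091200) (1250000001059379429523/1250000000000000000000)); [lra| |lra].
  apply up_base; lra.
  - apply (up_step (248461459/200000000) (248461459/100000000) (17317978973291215602297/5000000000000000000000)); [lra| |lra].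
  apply (up_step (248461459/400000000) (248461459/200000000) (18610738283738888579759/10000000000000000000000)); [lra| |lra].
  apply (up_step (248461459/800000000) (248461459/400000000) (13642117974764361558841/10000000000000000000000)); [lra| |lra].
  apply (up_step (248461459/1600000000) (248461459/800000000) (182499183797701009299/156250000000000000000)); [lra| |lra].
  apply (up_step (248461459/3200000000) (248461459/1600000000) (5403690350828048833993/5000000000000000000000)); [lra| |lra].
  apply (up_step (248461459/6400000000) (248461459/3200000000) (41583421122665889031/40000000000000000000)); [lra| |lra].
  apply (up_step (248461459/12800000000) (248461459/6400000000) (10196006708837765499869/10000000000000000000000)); [lra| |lra].
  apply (up_step (248461459/25600000000) (248461459/12800000000) (2524381942777994804879/2500000000000000000000)); [lra| |lra].
  apply (up_step (248461459/51200000000) (248461459/25600000000) (5024322783000704867113/5000000000000000000000)); [lra| |lra].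
  apply (up_step (248461459/102400000000) (248461459/51200000000) (2004858654968116173429/2000000000000000000000)); [lra| |lra].
  apply (up_step (248461459/204800000000) (248461459/102400000000) (10012139269327300396761/10000000000000000000000)); [lra| |lra].
  apply (up_step (248461459/409600000000) (248461459/204800000000) (5003033896878797981177/5000000000000000000000)); [lra| |lra].
  apply (up_step (248461459/819200000000) (248461459/409600000000) (10003033436791859470843/10000000000000000000000)); [lra| |lra].
  apply (up_step (248461459/1638400000000) (248461459/819200000000) (2500379150847909339781/2500000000000000000000)); [lra| |lra].
  apply (up_step (248461459/3276800000000) (248461459/1638400000000) (5000379136473462788801/5000000000000000000000)); [lra| |lra].
  apply (up_step (248461459/6553600000000) (248461459/3276800000000) (5000189564643255997123/5000000000000000000000)); [lra| |lra].
  apply (up_step (248461459/13107200000000) (248461459/6553600000000) (10000189562846552357471/10000000000000000000000)); [lra| |lra].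
  apply (up_step (248461459/26214400000000) (248461459/13107200000000) (80000758247792836209/80000000000000000000)); [lra| |lra].
  apply (up_step (248461459/52428800000000) (248461459/26214400000000) (2500011847593689970517/2500000000000000000000)); [lra| |lra].
  apply (up_step (248461459/104857600000000) (248461459/52428800000000) (2000004739031861382461/2000000000000000000000)); [lra| |lra].
  apply (up_step (248461459/209715200000000) (248461459/104857600000000) (2000002369514527041457/2000000000000000000000)); [lra| |lra].
  apply (up_step (248461459/419430400000000) (248461459/209715200000000) (2000001184756912608493/2000000000000000000000)); [lra| |lra].
  apply (up_step (248461459/838860800000000) (248461459/419430400000000) (2500000740472960720267/2500000000000000000000)); [lra| |lra].
  apply (up_step (248461459/1677721600000000) (248461459/838860800000000) (10000001480945811780509/10000000000000000000000)); [lra| |lra].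
  apply (up_step (248461459/3355443200000000) (248461459/1677721600000000) (40000002961891513901/40000000000000000000)); [lra| |lra].
  apply (up_step (248461459/6710886400000000) (248461459/3355443200000000) (5000000185118216191937/5000000000000000000000)); [lra| |lra].
  apply (up_step (248461459/13421772800000000) (248461459/6710886400000000) (10000000185118214478499/10000000000000000000000)); [lra| |lra].
  apply (up_step (248461459/26843545600000000) (248461459/13421772800000000) (1000000009255910681089/1000000000000000000000)); [lra| |lra].
  apply (up_step (248461459/53687091200000000) (248461459/26843545600000000) (2000000009255910659671/2000000000000000000000)); [lra| |lra].
  apply (up_step (248461459/107374182400000000) (248461459/53687091200000000) (2000000004627955324481/2000000000000000000000)); [lra| |lra].
  apply up_base; lra.
Qed.

Lemma lnln_b_12 : (317/200) <= ln (ln 132).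
Proof.
  apply (lnln_lb _ (97620933/20000000)).
  - apply (up_step (317/400) (317/200) (2761139762461523388579/1250000000000000000000)); [lra| |lra].
  apply (up_step (317/800) (317/400) (3715602079381969683701/2500000000000000000000)); [lra| |lra].
  apply (up_step (317/1600) (317/800) (6095573869113530547389/5000000000000000000000)); [lra| |lra].
  apply (up_step (317/3200) (317/1600) (11041353059397684659647/10000000000000000000000)); [lra| |lra].
  apply (up_step (317/6400) (317/3200) (5253892142830323810293/5000000000000000000000)); [lra| |lra].
  apply (up_step (317/12800) (317/6400) (5125374202353582207317/5000000000000000000000)); [lra| |lra].
  apply (up_step (317/25600) (317/12800) (10124597969651518175107/10000000000000000000000)); [lra| |lra].
  apply (up_step (317/51200) (317/25600) (1257763265784960709297/1250000000000000000000)); [lra| |lra].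
  apply (up_step (317/102400) (317/51200) (10031004997645891749541/10000000000000000000000)); [lra| |lra].
  apply (up_step (317/204800) (317/102400) (10015490501041819544151/10000000000000000000000)); [lra| |lra].
  apply (up_step (317/409600) (317/204800) (2001548450679305394081/2000000000000000000000)); [lra| |lra].
  apply (up_step (317/819200) (317/409600) (5001935188853541855337/5000000000000000000000)); [lra| |lra].
  apply (up_step (317/1638400) (317/819200) (10001935001641974133207/10000000000000000000000)); [lra| |lra].
  apply (up_step (317/3276800) (317/1638400) (5000483727011311386077/5000000000000000000000)); [lra| |lra].
  apply (up_step (317/6553600) (317/3276800) (10000483715312286219069/10000000000000000000000)); [lra| |lra].
  apply (up_step (317/13107200) (317/6553600) (5000120927365728776557/5000000000000000000000)); [lra| |lra].
  apply (up_step (317/26214400) (317/13107200) (10000120926634566229181/10000000000000000000000)); [lra| |lra].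
  apply (up_step (317/52428800) (317/26214400) (10000060463134493582951/10000000000000000000000)); [lra| |lra].
  apply (up_step (317/104857600) (317/52428800) (2000006046304309909343/2000000000000000000000)); [lra| |lra].
  apply (up_step (317/209715200) (317/104857600) (2500003778937337619859/2500000000000000000000)); [lra| |lra].
  apply (up_step (317/419430400) (317/209715200) (2500001889467954792099/2500000000000000000000)); [lra| |lra].
  apply (up_step (317/838860800) (317/419430400) (10000003778935195566637/10000000000000000000000)); [lra| |lra].
  apply (up_step (317/1677721600) (317/838860800) (5000000944733709639481/5000000000000000000000)); [lra| |lra].
  apply (up_step (317/3355443200) (317/1677721600) (2500000236183416253349/2500000000000000000000)); [lra| |lra].
  apply (up_step (317/6710886400) (317/3355443200) (10000000472366821350177/10000000000000000000000)); [lra| |lra].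
  apply (up_step (317/13421772800) (317/6710886400) (5000000118091703942979/5000000000000000000000)); [lra| |lra].
  apply (up_step (317/26843545600) (317/13421772800) (78125000922591431607/78125000000000000000)); [lra| |lra].
  apply (up_step (317/53687091200) (317/26843545600) (10000000059045851448527/10000000000000000000000)); [lra| |lra].
  apply (up_step (317/107374182400) (317/53687091200) (10000000029522925680683/10000000000000000000000)); [lra| |lra].
  apply (up_step (317/214748364800) (317/107374182400) (5000000007380731414723/5000000000000000000000)); [lra| |lra].
  apply up_base; lra.
  - apply (up_step (97620933/40000000) (97620933/20000000) (57395232534236369690249/5000000000000000000000)); [lra| |lra].
  apply (up_step (97620933/80000000) (97620933/40000000) (16940370794973227162949/5000000000000000000000)); [lra| |lra].
  apply (up_step (97620933/160000000) (97620933/80000000) (18406722030265588363397/10000000000000000000000)); [lra| |lra].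
  apply (up_step (97620933/320000000) (97620933/160000000) (3391784378305318029127/2500000000000000000000)); [lra| |lra].
  apply (up_step (97620933/640000000) (97620933/320000000) (1455975699124413191593/1250000000000000000000)); [lra| |lra].
  apply (up_step (97620933/1280000000) (97620933/640000000) (10792499985172715084901/10000000000000000000000)); [lra| |lra].
  apply (up_step (97620933/2560000000) (97620933/1280000000) (10388695772411816605887/10000000000000000000000)); [lra| |lra].
  apply (up_step (97620933/5120000000) (97620933/2560000000) (5096247583372450471033/5000000000000000000000)); [lra| |lra].
  apply (up_step (97620933/10240000000) (97620933/5120000000) (10095788808579991755921/10000000000000000000000)); [lra| |lra].
  apply (up_step (97620933/20480000000) (97620933/10240000000) (10047780256643748753117/10000000000000000000000)); [lra| |lra].
  apply (up_step (97620933/40960000000) (97620933/20480000000) (501193082969122508647/500000000000000000000)); [lra| |lra].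
  apply (up_step (97620933/81920000000) (97620933/40960000000) (10011923720935178086261/10000000000000000000000)); [lra| |lra].
  apply (up_step (97620933/163840000000) (97620933/81920000000) (50029800421686618213/50000000000000000000)); [lra| |lra].
  apply (up_step (97620933/327680000000) (97620933/163840000000) (10002979598268369777691/10000000000000000000000)); [lra| |lra].
  apply (up_step (97620933/655360000000) (97620933/327680000000) (10001489688175641856487/10000000000000000000000)); [lra| |lra].
  apply (up_step (97620933/1310720000000) (97620933/655360000000) (10000744816350251148171/10000000000000000000000)); [lra| |lra].
  apply (up_step (97620933/2621440000000) (97620933/1310720000000) (1000037240124099135949/1000000000000000000000)); [lra| |lra].
  apply (up_step (97620933/5242880000000) (97620933/2621440000000) (10000186198886994403847/10000000000000000000000)); [lra| |lra].
  apply (up_step (97620933/10485760000000) (97620933/5242880000000) (5000046549505062958801/5000000000000000000000)); [lra| |lra].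
  apply (up_step (97620933/20971520000000) (97620933/10485760000000) (4882835229197617501/4882812500000000000)); [lra| |lra].
  apply (up_step (97620933/41943040000000) (97620933/20971520000000) (2500005818667818701219/2500000000000000000000)); [lra| |lra].
  apply (up_step (97620933/83886080000000) (97620933/41943040000000) (10000011637328866031281/10000000000000000000000)); [lra| |lra].
  apply (up_step (97620933/167772160000000) (97620933/83886080000000) (2500001454665685043459/2500000000000000000000)); [lra| |lra].
  apply (up_step (97620933/335544320000000) (97620933/167772160000000) (1000000290933094687659/1000000000000000000000)); [lra| |lra].
  apply (up_step (97620933/671088640000000) (97620933/335544320000000) (625000090916585477233/625000000000000000000)); [lra| |lra].
  apply (up_step (97620933/1342177280000000) (97620933/671088640000000) (1250000090916582170903/1250000000000000000000)); [lra| |lra].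
  apply (up_step (97620933/2684354560000000) (97620933/1342177280000000) (1250000045458290258869/1250000000000000000000)); [lra| |lra].
  apply (up_step (97620933/5368709120000000) (97620933/2684354560000000) (10000000181833159382311/10000000000000000000000)); [lra| |lra].
  apply (up_step (97620933/10737418240000000) (97620933/5368709120000000) (1250000011364572409733/1250000000000000000000)); [lra| |lra].
  apply (up_step (97620933/21474836480000000) (97620933/10737418240000000) (10000000045458289535609/10000000000000000000000)); [lra| |lra].
  apply up_base; lra.
Qed.

Lemma lnln_a_48 : (1353/1000) <= ln (ln 48).
Proof.
  apply (lnln_lb _ (38701081/10000000)).
  - apply (up_step (1353/2000) (1353/1000) (19669812369146134241027/10000000000000000000000)); [lra| |lra].
  apply (up_step (1353/4000) (1353/2000) (14024910826506575061699/10000000000000000000000)); [lra| |lra].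
  apply (up_step (1353/8000) (1353/4000) (11842681633188732757769/10000000000000000000000)); [lra| |lra].
  apply (up_step (1353/16000) (1353/8000) (10882408572181405079929/10000000000000000000000)); [lra| |lra].
  apply (up_step (1353/32000) (1353/16000) (5215939170509325705917/5000000000000000000000)); [lra| |lra].
  apply (up_step (1353/64000) (1353/32000) (1276707088875190777641/1250000000000000000000)); [lra| |lra].
  apply (up_step (1353/128000) (1353/64000) (5053131878103303129031/5000000000000000000000)); [lra| |lra].
  apply (up_step (1353/256000) (1353/128000) (402119658931648976063/400000000000000000000)); [lra| |lra].
  apply (up_step (1353/512000) (1353/256000) (5013230364069465041237/5000000000000000000000)); [lra| |lra].
  apply (up_step (1353/1024000) (1353/512000) (2503305405875765551223/2500000000000000000000)); [lra| |lra].
  apply (up_step (1353/2048000) (1353/1024000) (500330431402664688169/500000000000000000000)); [lra| |lra].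
  apply (up_step (1353/4096000) (1353/2048000) (5001651884141201845429/5000000000000000000000)); [lra| |lra].
  apply (up_step (1353/8192000) (1353/4096000) (10001651747727674051609/10000000000000000000000)); [lra| |lra].
  apply (up_step (1353/16384000) (1353/8192000) (2000165167952654259161/2000000000000000000000)); [lra| |lra].
  apply (up_step (1353/32768000) (1353/16384000) (10000412911356846217273/10000000000000000000000)); [lra| |lra].
  apply (up_step (1353/65536000) (1353/32768000) (10000206453547269749623/10000000000000000000000)); [lra| |lra].
  apply (up_step (1353/131072000) (1353/65536000) (10000103226240852034789/10000000000000000000000)); [lra| |lra].
  apply (up_step (1353/262144000) (1353/131072000) (10000051612987230994849/10000000000000000000000)); [lra| |lra].
  apply (up_step (1353/524288000) (1353/262144000) (250000645161507920693/250000000000000000000)); [lra| |lra].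
  apply (up_step (1353/1048576000) (1353/524288000) (400000516128873350287/400000000000000000000)); [lra| |lra].
  apply (up_step (1353/2097152000) (1353/1048576000) (10000006451608835715759/10000000000000000000000)); [lra| |lra].
  apply (up_step (1353/4194304000) (1353/2097152000) (500000161290194878367/500000000000000000000)); [lra| |lra].
  apply (up_step (1353/8388608000) (1353/4194304000) (625000100806363669441/625000000000000000000)); [lra| |lra].
  apply (up_step (1353/16777216000) (1353/8388608000) (10000000806450876837377/10000000000000000000000)); [lra| |lra].
  apply (up_step (1353/33554432000) (1353/16777216000) (10000000403225430289151/10000000000000000000000)); [lra| |lra].
  apply (up_step (1353/67108864000) (1353/33554432000) (10000000201612713112191/10000000000000000000000)); [lra| |lra].
  apply (up_step (1353/134217728000) (1353/67108864000) (10000000100806356047999/10000000000000000000000)); [lra| |lra].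
  apply (up_step (1353/268435456000) (1353/134217728000) (400000002016127115879/400000000000000000000)); [lra| |lra].
  apply (up_step (1353/536870912000) (1353/268435456000) (10000000025201588916731/10000000000000000000000)); [lra| |lra].
  apply (up_step (1353/1073741824000) (1353/536870912000) (5000000006300397225213/5000000000000000000000)); [lra| |lra].
  apply up_base; lra.
  - apply (up_step (38701081/20000000) (38701081/10000000) (692441833422146002421/100000000000000000000)); [lra| |lra].
  apply (up_step (38701081/40000000) (38701081/20000000) (26314289529116038864991/10000000000000000000000)); [lra| |lra].
  apply (up_step (38701081/80000000) (38701081/40000000) (16221679792523349788781/10000000000000000000000)); [lra| |lra].
  apply (up_step (38701081/160000000) (38701081/80000000) (1592054480092240249369/1250000000000000000000)); [lra| |lra].
  apply (up_step (38701081/320000000) (38701081/160000000) (11285581881647894009467/10000000000000000000000)); [lra| |lra].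
  apply (up_step (38701081/640000000) (38701081/320000000) (10623361935681140111659/10000000000000000000000)); [lra| |lra].
  apply (up_step (38701081/1280000000) (38701081/640000000) (82455755644078174147/80000000000000000000)); [lra| |lra].
  apply (up_step (38701081/2560000000) (38701081/1280000000) (5076162294369086602021/5000000000000000000000)); [lra| |lra].
  apply (up_step (38701081/5120000000) (38701081/2560000000) (1259484305972225905263/1250000000000000000000)); [lra| |lra].
  apply (up_step (38701081/10240000000) (38701081/5120000000) (5018932766977907834789/5000000000000000000000)); [lra| |lra].
  apply (up_step (38701081/20480000000) (38701081/10240000000) (10018914878346764190347/10000000000000000000000)); [lra| |lra].
  apply (up_step (38701081/40960000000) (38701081/20480000000) (1251181621405014846193/1250000000000000000000)); [lra| |lra].
  apply (up_step (38701081/81920000000) (38701081/40960000000) (5002362684582186202347/5000000000000000000000)); [lra| |lra].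
  apply (up_step (38701081/163840000000) (38701081/81920000000) (500118120276709540179/500000000000000000000)); [lra| |lra].
  apply (up_step (38701081/327680000000) (38701081/163840000000) (10001181133013335642223/10000000000000000000000)); [lra| |lra].
  apply (up_step (38701081/655360000000) (38701081/327680000000) (10000590549069257661057/10000000000000000000000)); [lra| |lra].
  apply (up_step (38701081/1310720000000) (38701081/655360000000) (10000295270175405006343/10000000000000000000000)); [lra| |lra].
  apply (up_step (38701081/2621440000000) (38701081/1310720000000) (2500036908499478159047/2500000000000000000000)); [lra| |lra].
  apply (up_step (38701081/5242880000000) (38701081/2621440000000) (2000014763345302172491/2000000000000000000000)); [lra| |lra].
  apply (up_step (38701081/10485760000000) (38701081/5242880000000) (625002306768446519919/625000000000000000000)); [lra| |lra].
  apply (up_step (38701081/20971520000000) (38701081/10485760000000) (2500004613532636103161/2500000000000000000000)); [lra| |lra].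
  apply (up_step (38701081/41943040000000) (38701081/20971520000000) (10000009227061015273573/10000000000000000000000)); [lra| |lra].
  apply (up_step (38701081/83886080000000) (38701081/41943040000000) (1000000461352944340409/1000000000000000000000)); [lra| |lra].
  apply (up_step (38701081/167772160000000) (38701081/83886080000000) (2500000576691113910983/2500000000000000000000)); [lra| |lra].
  apply (up_step (38701081/335544320000000) (38701081/167772160000000) (2000000230676432261489/2000000000000000000000)); [lra| |lra].
  apply (up_step (38701081/671088640000000) (38701081/335544320000000) (10000000576691064025093/10000000000000000000000)); [lra| |lra].
  apply (up_step (38701081/1342177280000000) (38701081/671088640000000) (10000000288345527855389/10000000000000000000000)); [lra| |lra].
  apply (up_step (38701081/2684354560000000) (38701081/1342177280000000) (2000000028834552577681/2000000000000000000000)); [lra| |lra].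
  apply (up_step (38701081/5368709120000000) (38701081/2684354560000000) (500000003604319059219/500000000000000000000)); [lra| |lra].
  apply (up_step (38701081/10737418240000000) (38701081/5368709120000000) (5000000018021595263617/5000000000000000000000)); [lra| |lra].
  apply up_base; lra.
Qed.

Lemma lnln_b_48 : (367/200) <= ln (ln 528).
Proof.
  apply (lnln_lb _ (626711521/100000000)).
  - apply (up_step (367/400) (367/200) (25030250009259954903149/10000000000000000000000)); [lra| |lra].
  apply (up_step (367/800) (367/400) (7910475650879022031823/5000000000000000000000)); [lra| |lra].
  apply (up_step (367/1600) (367/800) (12578136309389417673439/10000000000000000000000)); [lra| |lra].
  apply (up_step (367/3200) (367/1600) (1401903633757362265107/1250000000000000000000)); [lra| |lra].
  apply (up_step (367/6400) (367/3200) (1323774732421155873523/1250000000000000000000)); [lra| |lra].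
  apply (up_step (367/12800) (367/6400) (10290868699662457061653/10000000000000000000000)); [lra| |lra].
  apply (up_step (367/25600) (367/12800) (5072195949404571520327/5000000000000000000000)); [lra| |lra].
  apply (up_step (367/51200) (367/25600) (157374018771212706731/156250000000000000000)); [lra| |lra].
  apply (up_step (367/102400) (367/51200) (1003590414529633360367/1000000000000000000000)); [lra| |lra].
  apply (up_step (367/204800) (367/102400) (2003587197533097994283/2000000000000000000000)); [lra| |lra].
  apply (up_step (367/409600) (367/204800) (10008963976189288878809/10000000000000000000000)); [lra| |lra].
  apply (up_step (367/819200) (367/409600) (2501120246033426028501/2500000000000000000000)); [lra| |lra].
  apply (up_step (367/1638400) (367/819200) (10002240241132835394621/10000000000000000000000)); [lra| |lra].
  apply (up_step (367/3276800) (367/1638400) (5000560028919969728409/5000000000000000000000)); [lra| |lra].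
  apply (up_step (367/6553600) (367/3276800) (10000560013239228322859/10000000000000000000000)); [lra| |lra].
  apply (up_step (367/13107200) (367/6553600) (2000056000539907714797/2000000000000000000000)); [lra| |lra].
  apply (up_step (367/26214400) (367/13107200) (625008750023110256893/625000000000000000000)); [lra| |lra].
  apply (up_step (367/52428800) (367/26214400) (5000034999969941237983/5000000000000000000000)); [lra| |lra].
  apply (up_step (367/104857600) (367/52428800) (5000017499954345778781/5000000000000000000000)); [lra| |lra].
  apply (up_step (367/209715200) (367/104857600) (19531284179568424581/19531250000000000000)); [lra| |lra].
  apply (up_step (367/419430400) (367/209715200) (5000004374982844298879/5000000000000000000000)); [lra| |lra].
  apply (up_step (367/838860800) (367/419430400) (10000004374981887275553/10000000000000000000000)); [lra| |lra].
  apply (up_step (367/1677721600) (367/838860800) (10000002187490704381997/10000000000000000000000)); [lra| |lra].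
  apply (up_step (367/3355443200) (367/1677721600) (500000054687264618853/500000000000000000000)); [lra| |lra].
  apply (up_step (367/6710886400) (367/3355443200) (5000000273436315617523/5000000000000000000000)); [lra| |lra].
  apply (up_step (367/13421772800) (367/6710886400) (625000017089769492447/625000000000000000000)); [lra| |lra].
  apply (up_step (367/26843545600) (367/13421772800) (10000000136718155004983/10000000000000000000000)); [lra| |lra].
  apply (up_step (367/53687091200) (367/26843545600) (10000000068359077268843/10000000000000000000000)); [lra| |lra].
  apply (up_step (367/107374182400) (367/53687091200) (10000000034179538576009/10000000000000000000000)); [lra| |lra].
  apply (up_step (367/214748364800) (367/107374182400) (10000000017089769273401/10000000000000000000000)); [lra| |lra].
  apply up_base; lra.
  - apply (up_step (626711521/200000000) (626711521/100000000) (114777506305188960885027/5000000000000000000000)); [lra| |lra].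
  apply (up_step (626711521/400000000) (626711521/200000000) (23955949814731721557709/5000000000000000000000)); [lra| |lra].
  apply (up_step (626711521/800000000) (626711521/400000000) (10944393499580440788627/5000000000000000000000)); [lra| |lra].
  apply (up_step (626711521/1600000000) (626711521/800000000) (231169680937336851787/156250000000000000000)); [lra| |lra].
  apply (up_step (626711521/3200000000) (626711521/1600000000) (6081706088752883517293/5000000000000000000000)); [lra| |lra].
  apply (up_step (626711521/6400000000) (626711521/3200000000) (5514393025870065564533/5000000000000000000000)); [lra| |lra].
  apply (up_step (626711521/12800000000) (626711521/6400000000) (1312725340878431998633/1250000000000000000000)); [lra| |lra].
  apply (up_step (626711521/25600000000) (626711521/12800000000) (2561957592231409281093/2500000000000000000000)); [lra| |lra].
  apply (up_step (626711521/51200000000) (626711521/25600000000) (5061578402268811326303/5000000000000000000000)); [lra| |lra].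
  apply (up_step (626711521/102400000000) (626711521/51200000000) (2515347491468328746841/2500000000000000000000)); [lra| |lra].
  apply (up_step (626711521/204800000000) (626711521/102400000000) (5015324008943319253993/5000000000000000000000)); [lra| |lra].
  apply (up_step (626711521/409600000000) (626711521/204800000000) (5007656142819372563989/5000000000000000000000)); [lra| |lra].
  apply (up_step (626711521/819200000000) (626711521/409600000000) (10007653214234966249487/10000000000000000000000)); [lra| |lra].
  apply (up_step (626711521/1638400000000) (626711521/819200000000) (2500956468812852789181/2500000000000000000000)); [lra| |lra].
  apply (up_step (626711521/3276800000000) (626711521/1638400000000) (5000956377347089786531/5000000000000000000000)); [lra| |lra].
  apply (up_step (626711521/6553600000000) (626711521/3276800000000) (1000095633161858155159/1000000000000000000000)); [lra| |lra].
  apply (up_step (626711521/13107200000000) (626711521/6553600000000) (10000478154377710329617/10000000000000000000000)); [lra| |lra].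
  apply (up_step (626711521/26214400000000) (626711521/13107200000000) (400009562973241135079/400000000000000000000)); [lra| |lra].
  apply (up_step (626711521/52428800000000) (626711521/26214400000000) (5000059768225533015907/5000000000000000000000)); [lra| |lra].
  apply (up_step (626711521/104857600000000) (626711521/52428800000000) (10000059768046922044263/10000000000000000000000)); [lra| |lra].
  apply (up_step (626711521/209715200000000) (626711521/104857600000000) (500001494198940420633/500000000000000000000)); [lra| |lra].
  apply (up_step (626711521/419430400000000) (626711521/209715200000000) (5000007470989120535321/5000000000000000000000)); [lra| |lra].
  apply (up_step (626711521/838860800000000) (626711521/419430400000000) (2500001867746582438371/2500000000000000000000)); [lra| |lra].
  apply (up_step (626711521/1677721600000000) (626711521/838860800000000) (10000003735492467181543/10000000000000000000000)); [lra| |lra].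
  apply (up_step (626711521/3355443200000000) (626711521/1677721600000000) (2500000466936514791751/2500000000000000000000)); [lra| |lra].
  apply (up_step (626711521/6710886400000000) (626711521/3355443200000000) (2500000233468246494391/2500000000000000000000)); [lra| |lra].
  apply (up_step (626711521/13421772800000000) (626711521/6710886400000000) (5000000233468241043649/5000000000000000000000)); [lra| |lra].
  apply (up_step (626711521/26843545600000000) (626711521/13421772800000000) (5000000116734119159139/5000000000000000000000)); [lra| |lra].
  apply (up_step (626711521/53687091200000000) (626711521/26843545600000000) (2500000029183529619449/2500000000000000000000)); [lra| |lra].
  apply (up_step (626711521/107374182400000000) (626711521/53687091200000000) (5000000029183529534281/5000000000000000000000)); [lra| |lra].
  apply up_base; lra.
Qed.

Lemma lnln_a_120 : (783/500) <= ln (ln 120).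
Proof.
  apply (lnln_lb _ (478747587/100000000)).
  - apply (up_step (783/1000) (783/500) (10940132549966773135607/5000000000000000000000)); [lra| |lra].
  apply (up_step (783/2000) (783/1000) (1848997409912901042103/1250000000000000000000)); [lra| |lra].
  apply (up_step (783/4000) (783/2000) (760139257371819716791/625000000000000000000)); [lra| |lra].
  apply (up_step (783/8000) (783/4000) (5514124617278139523099/5000000000000000000000)); [lra| |lra].
  apply (up_step (783/16000) (783/8000) (10501547140567564507531/10000000000000000000000)); [lra| |lra].
  apply (up_step (783/32000) (783/16000) (10247705665449005521379/10000000000000000000000)); [lra| |lra].
  apply (up_step (783/64000) (783/32000) (10123095211173806559131/10000000000000000000000)); [lra| |lra].
  apply (up_step (783/128000) (783/64000) (10061359357052011468091/10000000000000000000000)); [lra| |lra].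
  apply (up_step (783/256000) (783/128000) (2507658190056513098293/2500000000000000000000)); [lra| |lra].
  apply (up_step (783/512000) (783/256000) (10015304668469178623069/10000000000000000000000)); [lra| |lra].
  apply (up_step (783/1024000) (783/512000) (1250956176070252734357/1250000000000000000000)); [lra| |lra].
  apply (up_step (783/2048000) (783/1024000) (312619499160702538017/312500000000000000000)); [lra| |lra].
  apply (up_step (783/4096000) (783/2048000) (5000955901910774001997/5000000000000000000000)); [lra| |lra].
  apply (up_step (783/8192000) (783/4096000) (10000955856227717598671/10000000000000000000000)); [lra| |lra].
  apply (up_step (783/16384000) (783/8192000) (5000238958346820248161/5000000000000000000000)); [lra| |lra].
  apply (up_step (783/32768000) (783/16384000) (5000119477745916947141/5000000000000000000000)); [lra| |lra].
  apply (up_step (783/65536000) (783/32768000) (10000119477032178886227/10000000000000000000000)); [lra| |lra].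
  apply (up_step (783/131072000) (783/65536000) (5000029869168827996909/5000000000000000000000)); [lra| |lra].
  apply (up_step (783/262144000) (783/131072000) (5000014934562109883913/5000000000000000000000)); [lra| |lra].
  apply (up_step (783/524288000) (783/262144000) (10000014934550957843297/10000000000000000000000)); [lra| |lra].
  apply (up_step (783/1048576000) (783/524288000) (1250000933409086364197/1250000000000000000000)); [lra| |lra].
  apply (up_step (783/2097152000) (783/1048576000) (1000000373363564845503/1000000000000000000000)); [lra| |lra].
  apply (up_step (783/4194304000) (783/2097152000) (2500000466704412494277/2500000000000000000000)); [lra| |lra].
  apply (up_step (783/8388608000) (783/4194304000) (2500000233352195356489/2500000000000000000000)); [lra| |lra].
  apply (up_step (783/16777216000) (783/8388608000) (10000000466704379822329/10000000000000000000000)); [lra| |lra].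
  apply (up_step (783/33554432000) (783/16777216000) (5000000116676093594251/5000000000000000000000)); [lra| |lra].
  apply (up_step (783/67108864000) (783/33554432000) (2000000023335218582717/2000000000000000000000)); [lra| |lra].
  apply (up_step (783/134217728000) (783/67108864000) (5000000029169023143313/5000000000000000000000)); [lra| |lra].
  apply (up_step (783/268435456000) (783/134217728000) (10000000029169023100771/10000000000000000000000)); [lra| |lra].
  apply (up_step (783/536870912000) (783/268435456000) (40000000058338046159/40000000000000000000)); [lra| |lra].
  apply up_base; lra.
  - apply (up_step (478747587/200000000) (478747587/100000000) (2190872854019721972643/200000000000000000000)); [lra| |lra].
  apply (up_step (478747587/400000000) (478747587/200000000) (827434448691352900969/250000000000000000000)); [lra| |lra].
  apply (up_step (478747587/800000000) (478747587/400000000) (1137042798702071243967/625000000000000000000)); [lra| |lra].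
  apply (up_step (478747587/1600000000) (478747587/800000000) (13488026089548144072967/10000000000000000000000)); [lra| |lra].
  apply (up_step (478747587/3200000000) (478747587/1600000000) (5806898072454032680859/5000000000000000000000)); [lra| |lra].
  apply (up_step (478747587/6400000000) (478747587/3200000000) (10776732410572355564169/10000000000000000000000)); [lra| |lra].
  apply (up_step (478747587/12800000000) (478747587/6400000000) (2595276046321030996697/2500000000000000000000)); [lra| |lra].
  apply (up_step (478747587/25600000000) (478747587/12800000000) (10188770379827059380047/10000000000000000000000)); [lra| |lra].
  apply (up_step (478747587/51200000000) (478747587/25600000000) (1009394391693705586741/1000000000000000000000)); [lra| |lra].
  apply (up_step (478747587/102400000000) (478747587/51200000000) (1004686215538814679293/1000000000000000000000)); [lra| |lra].
  apply (up_step (478747587/204800000000) (478747587/102400000000) (10023403691056320411863/10000000000000000000000)); [lra| |lra].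
  apply (up_step (478747587/409600000000) (478747587/204800000000) (500584750343443852593/500000000000000000000)); [lra| |lra].
  apply (up_step (478747587/819200000000) (478747587/409600000000) (10005845794768614687787/10000000000000000000000)); [lra| |lra].
  apply (up_step (478747587/1638400000000) (478747587/819200000000) (100029224703426621569/100000000000000000000)); [lra| |lra].
  apply (up_step (478747587/3276800000000) (478747587/1638400000000) (10001461128426517139627/10000000000000000000000)); [lra| |lra].
  apply (up_step (478747587/6553600000000) (478747587/3276800000000) (10000730537529004505613/10000000000000000000000)); [lra| |lra].
  apply (up_step (478747587/13107200000000) (478747587/6553600000000) (1250045657761710299843/1250000000000000000000)); [lra| |lra].
  apply (up_step (478747587/26214400000000) (478747587/13107200000000) (10000182629379166692631/10000000000000000000000)); [lra| |lra].
  apply (up_step (478747587/52428800000000) (478747587/26214400000000) (5000045657136334263333/5000000000000000000000)); [lra| |lra].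
  apply (up_step (478747587/104857600000000) (478747587/52428800000000) (1250005707129013254287/1250000000000000000000)); [lra| |lra].
  apply (up_step (478747587/209715200000000) (478747587/104857600000000) (10000022828489996019373/10000000000000000000000)); [lra| |lra].
  apply (up_step (478747587/419430400000000) (478747587/209715200000000) (5000005707119241883839/5000000000000000000000)); [lra| |lra].
  apply (up_step (478747587/838860800000000) (478747587/419430400000000) (5000002853558806662133/5000000000000000000000)); [lra| |lra].
  apply (up_step (478747587/1677721600000000) (478747587/838860800000000) (2500000713389599880589/2500000000000000000000)); [lra| |lra].
  apply (up_step (478747587/3355443200000000) (478747587/1677721600000000) (1250000178347387247031/1250000000000000000000)); [lra| |lra].
  apply (up_step (478747587/6710886400000000) (478747587/3355443200000000) (10000000713389523541893/10000000000000000000000)); [lra| |lra].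
  apply (up_step (478747587/13421772800000000) (478747587/6710886400000000) (10000000356694755409389/10000000000000000000000)); [lra| |lra].
  apply (up_step (478747587/26843545600000000) (478747587/13421772800000000) (2000000035669475222861/2000000000000000000000)); [lra| |lra].
  apply (up_step (478747587/53687091200000000) (478747587/26843545600000000) (2000000017834737531911/2000000000000000000000)); [lra| |lra].
  apply (up_step (478747587/107374182400000000) (478747587/53687091200000000) (5000000022293421865189/5000000000000000000000)); [lra| |lra].
  apply up_base; lra.
Qed.

Lemma lnln_b_120 : (493/250) <= ln (ln 1320).
Proof.
  apply (lnln_lb _ (1122689/156250)).
  - apply (up_step (493/500) (493/250) (26804910380850132341097/10000000000000000000000)); [lra| |lra].
  apply (up_step (493/1000) (493/500) (163722052213042248871/100000000000000000000)); [lra| |lra].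
  apply (up_step (493/2000) (493/1000) (799711989692036744727/625000000000000000000)); [lra| |lra].
  apply (up_step (493/4000) (493/2000) (5655835887619218198657/5000000000000000000000)); [lra| |lra].
  apply (up_step (493/8000) (493/4000) (10635634337094537586589/10000000000000000000000)); [lra| |lra].
  apply (up_step (493/16000) (493/8000) (10312921185141743138943/10000000000000000000000)); [lra| |lra].
  apply (up_step (493/32000) (493/16000) (10155255380905860379683/10000000000000000000000)); [lra| |lra].
  apply (up_step (493/64000) (493/32000) (2015465740805917085751/2000000000000000000000)); [lra| |lra].
  apply (up_step (493/128000) (493/64000) (1254823736627827232481/1250000000000000000000)); [lra| |lra].
  apply (up_step (493/256000) (493/128000) (10019276367593928117819/10000000000000000000000)); [lra| |lra].
  apply (up_step (493/512000) (493/256000) (5004816771769454128429/5000000000000000000000)); [lra| |lra].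
  apply (up_step (493/1024000) (493/512000) (10004815612263380567363/10000000000000000000000)); [lra| |lra].
  apply (up_step (493/2048000) (493/1024000) (2500601879081236884809/2500000000000000000000)); [lra| |lra].
  apply (up_step (493/4096000) (493/2048000) (10001203685719508202219/10000000000000000000000)); [lra| |lra].
  apply (up_step (493/8192000) (493/4096000) (5000300912375051304653/5000000000000000000000)); [lra| |lra].
  apply (up_step (493/16384000) (493/8192000) (5000150453923887331017/5000000000000000000000)); [lra| |lra].
  apply (up_step (493/32768000) (493/16384000) (2000030090558417039741/2000000000000000000000)); [lra| |lra].
  apply (up_step (493/65536000) (493/32768000) (10000075226113094194789/10000000000000000000000)); [lra| |lra].
  apply (up_step (493/131072000) (493/65536000) (2500009403246452565579/2500000000000000000000)); [lra| |lra].
  apply (up_step (493/262144000) (493/131072000) (5000009403237610477823/5000000000000000000000)); [lra| |lra].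
  apply (up_step (493/524288000) (493/262144000) (5000004701616594719051/5000000000000000000000)); [lra| |lra].
  apply (up_step (493/1048576000) (493/524288000) (250000117540387236491/250000000000000000000)); [lra| |lra].
  apply (up_step (493/2097152000) (493/1048576000) (1250000293850933551879/1250000000000000000000)); [lra| |lra].
  apply (up_step (493/4194304000) (493/2097152000) (10000001175403665128827/10000000000000000000000)); [lra| |lra].
  apply (up_step (493/8388608000) (493/4194304000) (5000000293850907647371/5000000000000000000000)); [lra| |lra].
  apply (up_step (493/16777216000) (493/8388608000) (10000000293850903329953/10000000000000000000000)); [lra| |lra].
  apply (up_step (493/33554432000) (493/16777216000) (5000000073462725292811/5000000000000000000000)); [lra| |lra].
  apply (up_step (493/67108864000) (493/33554432000) (2500000018365681255743/2500000000000000000000)); [lra| |lra].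
  apply (up_step (493/134217728000) (493/67108864000) (5000000018365681222013/5000000000000000000000)); [lra| |lra].
  apply (up_step (493/268435456000) (493/134217728000) (2500000004591420301287/2500000000000000000000)); [lra| |lra].
  apply up_base; lra.
  - apply (up_step (1122689/312500) (1122689/156250) (90821454786827583417633/2500000000000000000000)); [lra| |lra].
  apply (up_step (1122689/625000) (1122689/312500) (30136598146908947927601/5000000000000000000000)); [lra| |lra].
  apply (up_step (1122689/1250000) (1122689/625000) (12275300026253726546347/5000000000000000000000)); [lra| |lra].
  apply (up_step (1122689/2500000) (1122689/1250000) (1566863109927202705431/1000000000000000000000)); [lra| |lra].
  apply (up_step (1122689/5000000) (1122689/2500000) (12517440273183661991341/10000000000000000000000)); [lra| |lra].
  apply (up_step (1122689/10000000) (1122689/5000000) (5594068348077198366253/5000000000000000000000)); [lra| |lra].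
  apply (up_step (1122689/20000000) (1122689/10000000) (2115479775006548885111/2000000000000000000000)); [lra| |lra].
  apply (up_step (1122689/40000000) (1122689/20000000) (10284648207417084242149/10000000000000000000000)); [lra| |lra].
  apply (up_step (1122689/80000000) (1122689/40000000) (10141325459434325955513/10000000000000000000000)); [lra| |lra].
  apply (up_step (1122689/160000000) (1122689/80000000) (5035207408695873660851/5000000000000000000000)); [lra| |lra].
  apply (up_step (1122689/320000000) (1122689/160000000) (156799150747932370967/156250000000000000000)); [lra| |lra].
  apply (up_step (1122689/640000000) (1122689/320000000) (2504389352700033908743/2500000000000000000000)); [lra| |lra].
  apply (up_step (1122689/1280000000) (1122689/640000000) (2001754971099123873483/2000000000000000000000)); [lra| |lra].
  apply (up_step (1122689/2560000000) (1122689/1280000000) (1000438646569374556337/1000000000000000000000)); [lra| |lra].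
  apply (up_step (1122689/5120000000) (1122689/2560000000) (10002192992386092508699/10000000000000000000000)); [lra| |lra].
  apply (up_step (1122689/10240000000) (1122689/5120000000) (2500274109021110472759/2500000000000000000000)); [lra| |lra].
  apply (up_step (1122689/20480000000) (1122689/10240000000) (400021928120635744551/400000000000000000000)); [lra| |lra].
  apply (up_step (1122689/40960000000) (1122689/20480000000) (5000137048875733969449/5000000000000000000000)); [lra| |lra].
  apply (up_step (1122689/81920000000) (1122689/40960000000) (10000137047936627122761/10000000000000000000000)); [lra| |lra].
  apply (up_step (1122689/163840000000) (1122689/81920000000) (5000034261866769229239/5000000000000000000000)); [lra| |lra].
  apply (up_step (1122689/327680000000) (1122689/163840000000) (625002141363004728413/625000000000000000000)); [lra| |lra].
  apply (up_step (1122689/655360000000) (1122689/327680000000) (10000017130889364458783/10000000000000000000000)); [lra| |lra].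
  apply (up_step (1122689/1310720000000) (1122689/655360000000) (10000008565441013890403/10000000000000000000000)); [lra| |lra].
  apply (up_step (1122689/2621440000000) (1122689/1310720000000) (10000004282719589860847/10000000000000000000000)); [lra| |lra].
  apply (up_step (1122689/5242880000000) (1122689/2621440000000) (1250000267669945707423/1250000000000000000000)); [lra| |lra].
  apply (up_step (1122689/10485760000000) (1122689/5242880000000) (5000000535339862755969/5000000000000000000000)); [lra| |lra].
  apply (up_step (1122689/20971520000000) (1122689/10485760000000) (10000000535339848426531/10000000000000000000000)); [lra| |lra].
  apply (up_step (1122689/41943040000000) (1122689/20971520000000) (5000000133834960315453/5000000000000000000000)); [lra| |lra].
  apply (up_step (1122689/83886080000000) (1122689/41943040000000) (10000000133834959419863/10000000000000000000000)); [lra| |lra].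
  apply (up_step (1122689/167772160000000) (1122689/83886080000000) (5000000033458739743017/5000000000000000000000)); [lra| |lra].
  apply up_base; lra.
Qed.

Lemma lnln_a_360 : (443/250) <= ln (ln 360).
Proof.
  apply (lnln_lb _ (294217771/50000000)).
  - apply (up_step (443/500) (443/250) (6063521473866371432563/2500000000000000000000)); [lra| |lra].
  apply (up_step (443/1000) (443/500) (973357709319456993809/625000000000000000000)); [lra| |lra].
  apply (up_step (443/2000) (443/1000) (3119868121122200565457/2500000000000000000000)); [lra| |lra].
  apply (up_step (443/4000) (443/2000) (11171155931455259326783/10000000000000000000000)); [lra| |lra].
  apply (up_step (443/8000) (443/4000) (165146389336186946851/156250000000000000000)); [lra| |lra].
  apply (up_step (443/16000) (443/8000) (10280743610029366255377/10000000000000000000000)); [lra| |lra].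
  apply (up_step (443/32000) (443/16000) (10139400184443538500027/10000000000000000000000)); [lra| |lra].
  apply (up_step (443/64000) (443/32000) (2517364716380447635219/2500000000000000000000)); [lra| |lra].
  apply (up_step (443/128000) (443/64000) (5017334667311368054003/5000000000000000000000)); [lra| |lra].
  apply (up_step (443/256000) (443/128000) (10017319668765061481687/10000000000000000000000)); [lra| |lra].
  apply (up_step (443/512000) (443/256000) (10008656087989566584899/10000000000000000000000)); [lra| |lra].
  apply (up_step (443/1024000) (443/512000) (5002163553900843460729/5000000000000000000000)); [lra| |lra].
  apply (up_step (443/2048000) (443/1024000) (10002163319903193283119/10000000000000000000000)); [lra| |lra].
  apply (up_step (443/4096000) (443/2048000) (2000216320291702177783/2000000000000000000000)); [lra| |lra].
  apply (up_step (443/8192000) (443/4096000) (5000270393053387390213/5000000000000000000000)); [lra| |lra].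
  apply (up_step (443/16384000) (443/8192000) (5000135194698933033147/5000000000000000000000)); [lra| |lra].
  apply (up_step (443/32768000) (443/16384000) (625008449611566566071/625000000000000000000)); [lra| |lra].
  apply (up_step (443/65536000) (443/32768000) (5000033798332033539459/5000000000000000000000)); [lra| |lra].
  apply (up_step (443/131072000) (443/65536000) (10000033798274917370089/10000000000000000000000)); [lra| |lra].
  apply (up_step (443/262144000) (443/131072000) (625001056195198729177/625000000000000000000)); [lra| |lra].
  apply (up_step (443/524288000) (443/262144000) (10000008449558020081879/10000000000000000000000)); [lra| |lra].
  apply (up_step (443/1048576000) (443/524288000) (1250000528097264700429/1250000000000000000000)); [lra| |lra].
  apply (up_step (443/2097152000) (443/1048576000) (5000001056194417846193/5000000000000000000000)); [lra| |lra].
  apply (up_step (443/4194304000) (443/2097152000) (5000000528097181034433/5000000000000000000000)); [lra| |lra].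
  apply (up_step (443/8388608000) (443/4194304000) (5000000264048583545051/5000000000000000000000)); [lra| |lra].
  apply (up_step (443/16777216000) (443/8388608000) (1250000033006072507371/1250000000000000000000)); [lra| |lra].
  apply (up_step (443/33554432000) (443/16777216000) (10000000132024289157963/10000000000000000000000)); [lra| |lra].
  apply (up_step (443/67108864000) (443/33554432000) (10000000066012144361101/10000000000000000000000)); [lra| |lra].
  apply (up_step (443/134217728000) (443/67108864000) (15625000051571987697/15625000000000000000)); [lra| |lra].
  apply (up_step (443/268435456000) (443/134217728000) (5000000008251518024711/5000000000000000000000)); [lra| |lra].
  apply up_base; lra.
  - apply (up_step (294217771/100000000) (294217771/50000000) (189570845787874370582707/10000000000000000000000)); [lra| |lra].
  apply (up_step (294217771/200000000) (294217771/100000000) (5442466780271182362961/1250000000000000000000)); [lra| |lra].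
  apply (up_step (294217771/400000000) (294217771/200000000) (4173235399167866682141/2000000000000000000000)); [lra| |lra].
  apply (up_step (294217771/800000000) (294217771/400000000) (14445129627607823378229/10000000000000000000000)); [lra| |lra].
  apply (up_step (294217771/1600000000) (294217771/800000000) (1502348662699082780013/1250000000000000000000)); [lra| |lra].
  apply (up_step (294217771/3200000000) (294217771/1600000000) (1370377987408530097707/1250000000000000000000)); [lra| |lra].
  apply (up_step (294217771/6400000000) (294217771/3200000000) (2617611494672700754133/2500000000000000000000)); [lra| |lra].
  apply (up_step (294217771/12800000000) (294217771/6400000000) (5116259859186885313979/5000000000000000000000)); [lra| |lra].
  apply (up_step (294217771/25600000000) (294217771/12800000000) (10115591786135782292409/10000000000000000000000)); [lra| |lra].
  apply (up_step (294217771/51200000000) (294217771/25600000000) (4910952066984496547/4882812500000000000)); [lra| |lra].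
  apply (up_step (294217771/102400000000) (294217771/51200000000) (1002877352081711382001/1000000000000000000000)); [lra| |lra].
  apply (up_step (294217771/204800000000) (294217771/102400000000) (2503594106581715081967/2500000000000000000000)); [lra| |lra].
  apply (up_step (294217771/409600000000) (294217771/204800000000) (10007185631498428603469/10000000000000000000000)); [lra| |lra].
  apply (up_step (294217771/819200000000) (294217771/409600000000) (5001796085282372995179/5000000000000000000000)); [lra| |lra].
  apply (up_step (294217771/1638400000000) (294217771/819200000000) (10001795924015219573059/10000000000000000000000)); [lra| |lra].
  apply (up_step (294217771/3276800000000) (294217771/1638400000000) (10000897921694441319111/10000000000000000000000)); [lra| |lra].
  apply (up_step (294217771/6553600000000) (294217771/3276800000000) (5000224475384690496583/5000000000000000000000)); [lra| |lra].
  apply (up_step (294217771/13107200000000) (294217771/6553600000000) (1250028059108160891759/1250000000000000000000)); [lra| |lra].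
  apply (up_step (294217771/26214400000000) (294217771/13107200000000) (1000011223580279979553/1000000000000000000000)); [lra| |lra].
  apply (up_step (294217771/52428800000000) (294217771/26214400000000) (250001402943598495963/250000000000000000000)); [lra| |lra].
  apply (up_step (294217771/104857600000000) (294217771/52428800000000) (5000014029416302507451/5000000000000000000000)); [lra| |lra].
  apply (up_step (294217771/209715200000000) (294217771/104857600000000) (156250219209475957737/156250000000000000000)); [lra| |lra].
  apply (up_step (294217771/419430400000000) (294217771/209715200000000) (10000007014700770346239/10000000000000000000000)); [lra| |lra].
  apply (up_step (294217771/838860800000000) (294217771/419430400000000) (10000003507349770097999/10000000000000000000000)); [lra| |lra].
  apply (up_step (294217771/1677721600000000) (294217771/838860800000000) (5000000876837365640123/5000000000000000000000)); [lra| |lra].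
  apply (up_step (294217771/3355443200000000) (294217771/1677721600000000) (5000000438418663598969/5000000000000000000000)); [lra| |lra].
  apply (up_step (294217771/6710886400000000) (294217771/3355443200000000) (10000000438418653988423/10000000000000000000000)); [lra| |lra].
  apply (up_step (294217771/13421772800000000) (294217771/6710886400000000) (400000008768372983663/400000000000000000000)); [lra| |lra].
  apply (up_step (294217771/26843545600000000) (294217771/13421772800000000) (1250000013700582711891/1250000000000000000000)); [lra| |lra].
  apply (up_step (294217771/53687091200000000) (294217771/26843545600000000) (10000000054802330697399/10000000000000000000000)); [lra| |lra].
  apply up_base; lra.
Qed.

Lemma lnln_b_360 : (1057/500) <= ln (ln 3960).
Proof.
  apply (lnln_lb _ (828264981/100000000)).
  - apply (up_step (1057/1000) (1057/500) (28777248549851514822511/10000000000000000000000)); [lra| |lra].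
  apply (up_step (1057/2000) (1057/1000) (16963858213817844458113/10000000000000000000000)); [lra| |lra].
  apply (up_step (1057/4000) (1057/2000) (407016802932403378297/312500000000000000000)); [lra| |lra].
  apply (up_step (1057/8000) (1057/4000) (2853127417177169738527/2500000000000000000000)); [lra| |lra].
  apply (up_step (1057/16000) (1057/8000) (213658696698343444277/200000000000000000000)); [lra| |lra].
  apply (up_step (1057/32000) (1057/16000) (1291978547792419097647/1250000000000000000000)); [lra| |lra].
  apply (up_step (1057/64000) (1057/32000) (5083263809389434192337/5000000000000000000000)); [lra| |lra].
  apply (up_step (1057/128000) (1057/64000) (100829200228797155647/100000000000000000000)); [lra| |lra].
  apply (up_step (1057/256000) (1057/128000) (200827488386223817403/200000000000000000000)); [lra| |lra].
  apply (up_step (1057/512000) (1057/256000) (10020665855775848027511/10000000000000000000000)); [lra| |lra].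
  apply (up_step (1057/1024000) (1057/512000) (10010327594927075126361/10000000000000000000000)); [lra| |lra].
  apply (up_step (1057/2048000) (1057/1024000) (10005162464911339522591/10000000000000000000000)); [lra| |lra].
  apply (up_step (1057/4096000) (1057/2048000) (2500645224850895797623/2500000000000000000000)); [lra| |lra].
  apply (up_step (1057/8192000) (1057/4096000) (500064518322475644691/500000000000000000000)); [lra| |lra].
  apply (up_step (1057/16384000) (1057/8192000) (1250080645301628685951/1250000000000000000000)); [lra| |lra].
  apply (up_step (1057/32768000) (1057/16384000) (10000322576003750834011/10000000000000000000000)); [lra| |lra].
  apply (up_step (1057/65536000) (1057/32768000) (10000161286701205417719/10000000000000000000000)); [lra| |lra].
  apply (up_step (1057/131072000) (1057/65536000) (10000080643025437831271/10000000000000000000000)); [lra| |lra].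
  apply (up_step (1057/262144000) (1057/131072000) (2000008064286285604803/2000000000000000000000)); [lra| |lra].
  apply (up_step (1057/524288000) (1057/262144000) (5000010080347695665037/5000000000000000000000)); [lra| |lra].
  apply (up_step (1057/1048576000) (1057/524288000) (400000403213704599987/400000000000000000000)); [lra| |lra].
  apply (up_step (1057/2097152000) (1057/1048576000) (10000005040170037334137/10000000000000000000000)); [lra| |lra].
  apply (up_step (1057/4194304000) (1057/2097152000) (10000002520084701125723/10000000000000000000000)); [lra| |lra].
  apply (up_step (1057/8388608000) (1057/4194304000) (2000000252008454235507/2000000000000000000000)); [lra| |lra].
  apply (up_step (1057/16777216000) (1057/8388608000) (10000000630021115742437/10000000000000000000000)); [lra| |lra].
  apply (up_step (1057/33554432000) (1057/16777216000) (2500000078752638227409/2500000000000000000000)); [lra| |lra].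
  apply (up_step (1057/67108864000) (1057/33554432000) (5000000078752637607211/5000000000000000000000)); [lra| |lra].
  apply (up_step (1057/134217728000) (1057/67108864000) (1250000009844079662139/1250000000000000000000)); [lra| |lra].
  apply (up_step (1057/268435456000) (1057/134217728000) (10000000039376318571031/10000000000000000000000)); [lra| |lra].
  apply (up_step (1057/536870912000) (1057/268435456000) (5000000009844079633067/5000000000000000000000)); [lra| |lra].
  apply up_base; lra.
  - apply (up_step (828264981/200000000) (828264981/100000000) (628860853713698356390229/10000000000000000000000)); [lra| |lra].
  apply (up_step (828264981/400000000) (828264981/200000000) (3172029895732253924219/400000000000000000000)); [lra| |lra].
  apply (up_step (828264981/800000000) (828264981/400000000) (28160388383917283626601/10000000000000000000000)); [lra| |lra].
  apply (up_step (828264981/1600000000) (828264981/800000000) (1678105729205322855917/1000000000000000000000)); [lra| |lra].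
  apply (up_step (828264981/3200000000) (828264981/1600000000) (259083440551905814459/200000000000000000000)); [lra| |lra].
  apply (up_step (828264981/6400000000) (828264981/3200000000) (11381639612812949509723/10000000000000000000000)); [lra| |lra].
  apply (up_step (828264981/12800000000) (828264981/6400000000) (10668476748258370511713/10000000000000000000000)); [lra| |lra].
  apply (up_step (828264981/25600000000) (828264981/12800000000) (5164415927348021635067/5000000000000000000000)); [lra| |lra].
  apply (up_step (828264981/51200000000) (828264981/25600000000) (10163086073971844144067/10000000000000000000000)); [lra| |lra].
  apply (up_step (828264981/102400000000) (828264981/51200000000) (2016242651465526769677/2000000000000000000000)); [lra| |lra].
  apply (up_step (828264981/204800000000) (828264981/102400000000) (200810490336811177743/200000000000000000000)); [lra| |lra].
  apply (up_step (828264981/409600000000) (828264981/204800000000) (10020241771953688187689/10000000000000000000000)); [lra| |lra].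
  apply (up_step (828264981/819200000000) (828264981/409600000000) (10010115769537177629299/10000000000000000000000)); [lra| |lra].
  apply (up_step (828264981/1638400000000) (828264981/819200000000) (2001011321261044502769/2000000000000000000000)); [lra| |lra].
  apply (up_step (828264981/3276800000000) (828264981/1638400000000) (5001263991808776363087/5000000000000000000000)); [lra| |lra].
  apply (up_step (828264981/6553600000000) (828264981/3276800000000) (10001263911935107377743/10000000000000000000000)); [lra| |lra].
  apply (up_step (828264981/13107200000000) (828264981/6553600000000) (1250078992000049782363/1250000000000000000000)); [lra| |lra].
  apply (up_step (828264981/26214400000000) (828264981/13107200000000) (2000063192601713598057/2000000000000000000000)); [lra| |lra].
  apply (up_step (828264981/52428800000000) (828264981/26214400000000) (2500039495064098981149/2500000000000000000000)); [lra| |lra].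
  apply (up_step (828264981/104857600000000) (828264981/52428800000000) (2500019747454057102227/2500000000000000000000)); [lra| |lra].
  apply (up_step (828264981/209715200000000) (828264981/104857600000000) (2000007898966024424827/2000000000000000000000)); [lra| |lra].
  apply (up_step (828264981/419430400000000) (828264981/209715200000000) (10000019747395563080491/10000000000000000000000)); [lra| |lra].
  apply (up_step (828264981/838860800000000) (828264981/419430400000000) (156250154276451672651/156250000000000000000)); [lra| |lra].
  apply (up_step (828264981/1677721600000000) (828264981/838860800000000) (2500001234211308725697/2500000000000000000000)); [lra| |lra].
  apply (up_step (828264981/3355443200000000) (828264981/1677721600000000) (5000001234211156397979/5000000000000000000000)); [lra| |lra].
  apply (up_step (828264981/6710886400000000) (828264981/3355443200000000) (10000001234211080234129/10000000000000000000000)); [lra| |lra].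
  apply (up_step (828264981/13421772800000000) (828264981/6710886400000000) (10000000617105521076103/10000000000000000000000)); [lra| |lra].
  apply (up_step (828264981/26843545600000000) (828264981/13421772800000000) (10000000308552755777811/10000000000000000000000)); [lra| |lra].
  apply (up_step (828264981/53687091200000000) (828264981/26843545600000000) (2000000030855275339769/2000000000000000000000)); [lra| |lra].
  apply (up_step (828264981/107374182400000000) (828264981/53687091200000000) (10000000077138188051907/10000000000000000000000)); [lra| |lra].
  apply up_base; lra.
Qed.

Lemma lnln_a_840 : (1907/1000) <= ln (ln 840).
Proof.
  apply (lnln_lb _ (673313089/100000000)).
  - apply (up_step (1907/2000) (1907/1000) (25947755012855679852571/10000000000000000000000)); [lra| |lra].
  apply (up_step (1907/4000) (1907/2000) (16108306867220924610371/10000000000000000000000)); [lra| |lra].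
  apply (up_step (1907/8000) (1907/4000) (6345925241290848324291/5000000000000000000000)); [lra| |lra].
  apply (up_step (1907/16000) (1907/8000) (2816452831419969015307/2500000000000000000000)); [lra| |lra].
  apply (up_step (1907/32000) (1907/16000) (10614052631148894044581/10000000000000000000000)); [lra| |lra].
  apply (up_step (1907/64000) (1907/32000) (10302452441602870143569/10000000000000000000000)); [lra| |lra].
  apply (up_step (1907/128000) (1907/64000) (10150099724437622560421/10000000000000000000000)); [lra| |lra].
  apply (up_step (1907/256000) (1907/128000) (10074770332090763130073/10000000000000000000000)); [lra| |lra].
  apply (up_step (1907/512000) (1907/256000) (2509328885888959545553/2500000000000000000000)); [lra| |lra].
  apply (up_step (1907/1024000) (1907/512000) (10018640398555004620189/10000000000000000000000)); [lra| |lra].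
  apply (up_step (1907/2048000) (1907/1024000) (10009315860015111252663/10000000000000000000000)); [lra| |lra].
  apply (up_step (1907/4096000) (1907/2048000) (10004656845696963360023/10000000000000000000000)); [lra| |lra].
  apply (up_step (1907/8192000) (1907/4096000) (2000465630366786717519/2000000000000000000000)); [lra| |lra].
  apply (up_step (1907/16384000) (1907/8192000) (2500291002042803915239/2500000000000000000000)); [lra| |lra].
  apply (up_step (1907/32768000) (1907/16384000) (10000581987150155683161/10000000000000000000000)); [lra| |lra].
  apply (up_step (1907/65536000) (1907/32768000) (2500072747335334500741/2500000000000000000000)); [lra| |lra].
  apply (up_step (1907/131072000) (1907/65536000) (2500036373403062360303/2500000000000000000000)); [lra| |lra].
  apply (up_step (1907/262144000) (1907/131072000) (10000072746541521755437/10000000000000000000000)); [lra| |lra].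
  apply (up_step (1907/524288000) (1907/262144000) (10000036373204610377037/10000000000000000000000)); [lra| |lra].
  apply (up_step (1907/1048576000) (1907/524288000) (625001136661610474589/625000000000000000000)); [lra| |lra].
  apply (up_step (1907/2097152000) (1907/1048576000) (5000004546644374700849/5000000000000000000000)); [lra| |lra].
  apply (up_step (1907/4194304000) (1907/2097152000) (2000000909328668220513/2000000000000000000000)); [lra| |lra].
  apply (up_step (1907/8388608000) (1907/4194304000) (1000000227332141215177/1000000000000000000000)); [lra| |lra].
  apply (up_step (1907/16777216000) (1907/8388608000) (5000000568330320738007/5000000000000000000000)); [lra| |lra].
  apply (up_step (1907/33554432000) (1907/16777216000) (250000014208257614701/250000000000000000000)); [lra| |lra].
  apply (up_step (1907/67108864000) (1907/33554432000) (625000017760321766033/625000000000000000000)); [lra| |lra].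
  apply (up_step (1907/134217728000) (1907/67108864000) (10000000142082573118891/10000000000000000000000)); [lra| |lra].
  apply (up_step (1907/268435456000) (1907/134217728000) (5000000035520643153551/5000000000000000000000)); [lra| |lra].
  apply (up_step (1907/536870912000) (1907/268435456000) (2000000007104128618093/2000000000000000000000)); [lra| |lra].
  apply (up_step (1907/1073741824000) (1907/536870912000) (10000000017760321529461/10000000000000000000000)); [lra| |lra].
  apply up_base; lra.
  - apply (up_step (673313089/200000000) (673313089/100000000) (289788268745949535695281/10000000000000000000000)); [lra| |lra].
  apply (up_step (673313089/400000000) (673313089/200000000) (53831985728370594419183/10000000000000000000000)); [lra| |lra].
  apply (up_step (673313089/800000000) (673313089/400000000) (5800430249579044934797/2500000000000000000000)); [lra| |lra].
  apply (up_step (673313089/1600000000) (673313089/800000000) (1904013893328224399973/1250000000000000000000)); [lra| |lra].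
  apply (up_step (673313089/3200000000) (673313089/1600000000) (771365245305406617003/625000000000000000000)); [lra| |lra].
  apply (up_step (673313089/6400000000) (673313089/3200000000) (1388673148463495186087/1250000000000000000000)); [lra| |lra].
  apply (up_step (673313089/12800000000) (673313089/6400000000) (10540106824747063012423/10000000000000000000000)); [lra| |lra].
  apply (up_step (673313089/25600000000) (673313089/12800000000) (1026650224017267870017/1000000000000000000000)); [lra| |lra].
  apply (up_step (673313089/51200000000) (673313089/25600000000) (5066187481768879104657/5000000000000000000000)); [lra| |lra].
  apply (up_step (673313089/102400000000) (673313089/51200000000) (10065969880512139804499/10000000000000000000000)); [lra| |lra].
  apply (up_step (673313089/204800000000) (673313089/102400000000) (5016465359322273792277/5000000000000000000000)); [lra| |lra].
  apply (up_step (673313089/409600000000) (673313089/204800000000) (10016451826193019526109/10000000000000000000000)); [lra| |lra].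
  apply (up_step (673313089/819200000000) (673313089/409600000000) (10008222532594396467439/10000000000000000000000)); [lra| |lra].
  apply (up_step (673313089/1638400000000) (673313089/819200000000) (10004110421518945063387/10000000000000000000000)); [lra| |lra].
  apply (up_step (673313089/3276800000000) (673313089/1638400000000) (5001027499804151512707/5000000000000000000000)); [lra| |lra].
  apply (up_step (673313089/6553600000000) (673313089/3276800000000) (1250128430877722798029/1250000000000000000000)); [lra| |lra].
  apply (up_step (673313089/13107200000000) (673313089/6553600000000) (10000513710315976755069/10000000000000000000000)); [lra| |lra].
  apply (up_step (673313089/26214400000000) (673313089/13107200000000) (5000128425929672247549/5000000000000000000000)); [lra| |lra].
  apply (up_step (673313089/52428800000000) (673313089/26214400000000) (2000025685021004373511/2000000000000000000000)); [lra| |lra].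
  apply (up_step (673313089/104857600000000) (673313089/52428800000000) (10000064212346349662591/10000000000000000000000)); [lra| |lra].
  apply (up_step (673313089/209715200000000) (673313089/104857600000000) (5000016053060817339487/5000000000000000000000)); [lra| |lra].
  apply (up_step (673313089/419430400000000) (673313089/209715200000000) (10000016053047932322091/10000000000000000000000)); [lra| |lra].
  apply (up_step (673313089/838860800000000) (673313089/419430400000000) (5000004013260372454641/5000000000000000000000)); [lra| |lra].
  apply (up_step (673313089/1677721600000000) (673313089/838860800000000) (10000004013259567142023/10000000000000000000000)); [lra| |lra].
  apply (up_step (673313089/3355443200000000) (673313089/1677721600000000) (10000002006629582242897/10000000000000000000000)); [lra| |lra].
  apply (up_step (673313089/6710886400000000) (673313089/3355443200000000) (400000040132589631577/400000000000000000000)); [lra| |lra].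
  apply (up_step (673313089/13421772800000000) (673313089/6710886400000000) (10000000501657357811707/10000000000000000000000)); [lra| |lra].
  apply (up_step (673313089/26843545600000000) (673313089/13421772800000000) (5000000125414337880051/5000000000000000000000)); [lra| |lra].
  apply (up_step (673313089/53687091200000000) (673313089/26843545600000000) (10000000125414337093613/10000000000000000000000)); [lra| |lra].
  apply (up_step (673313089/107374182400000000) (673313089/53687091200000000) (10000000062707168350197/10000000000000000000000)); [lra| |lra].
  apply up_base; lra.
Qed.

Lemma lnln_b_840 : (2211/1000) <= ln (ln 9240).
Proof.
  apply (lnln_lb _ (228201673/25000000)).
  - apply (up_step (2211/2000) (2211/1000) (30207344619453326756567/10000000000000000000000)); [lra| |lra].
  apply (up_step (2211/4000) (2211/2000) (8690130122652555361529/5000000000000000000000)); [lra| |lra].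
  apply (up_step (2211/8000) (2211/4000) (13183421500242306491927/10000000000000000000000)); [lra| |lra].
  apply (up_step (2211/16000) (2211/8000) (2296381632067484247489/2000000000000000000000)); [lra| |lra].
  apply (up_step (2211/32000) (2211/16000) (10715366610777916467099/10000000000000000000000)); [lra| |lra].
  apply (up_step (2211/64000) (2211/32000) (10351505499577303739577/10000000000000000000000)); [lra| |lra].
  apply (up_step (2211/128000) (2211/64000) (10174234860458698758383/10000000000000000000000)); [lra| |lra].
  apply (up_step (2211/256000) (2211/128000) (2521685307048975673987/2500000000000000000000)); [lra| |lra].
  apply (up_step (2211/512000) (2211/256000) (5021638484647192993299/5000000000000000000000)); [lra| |lra].
  apply (up_step (2211/1024000) (2211/512000) (10021615123967985424401/10000000000000000000000)); [lra| |lra].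
  apply (up_step (2211/2048000) (2211/1024000) (500540086405873825903/500000000000000000000)); [lra| |lra].
  apply (up_step (2211/4096000) (2211/2048000) (10005399406379275830803/10000000000000000000000)); [lra| |lra].
  apply (up_step (2211/8192000) (2211/4096000) (10002699338868121667783/10000000000000000000000)); [lra| |lra].
  apply (up_step (2211/16384000) (2211/8192000) (2500337394591493134709/2500000000000000000000)); [lra| |lra].
  apply (up_step (2211/32768000) (2211/16384000) (1250084345802187545013/1250000000000000000000)); [lra| |lra].
  apply (up_step (2211/65536000) (2211/32768000) (10000337377517570711943/10000000000000000000000)); [lra| |lra].
  apply (up_step (2211/131072000) (2211/65536000) (2500042171834003622347/2500000000000000000000)); [lra| |lra].
  apply (up_step (2211/262144000) (2211/131072000) (10000084343312317528059/10000000000000000000000)); [lra| |lra].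
  apply (up_step (2211/524288000) (2211/262144000) (10000042171567236709869/10000000000000000000000)); [lra| |lra].
  apply (up_step (2211/1048576000) (2211/524288000) (10000021085761387888269/10000000000000000000000)); [lra| |lra].
  apply (up_step (2211/2097152000) (2211/1048576000) (10000010542875136333327/10000000000000000000000)); [lra| |lra].
  apply (up_step (2211/4194304000) (2211/2097152000) (5000002635718089382347/5000000000000000000000)); [lra| |lra].
  apply (up_step (2211/8388608000) (2211/4194304000) (5000001317858871015973/5000000000000000000000)); [lra| |lra].
  apply (up_step (2211/16777216000) (2211/8388608000) (625000082366174011149/625000000000000000000)); [lra| |lra].
  apply (up_step (2211/33554432000) (2211/16777216000) (2500000164732342594949/2500000000000000000000)); [lra| |lra].
  apply (up_step (2211/67108864000) (2211/33554432000) (10000000329464679762549/10000000000000000000000)); [lra| |lra].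
  apply (up_step (2211/134217728000) (2211/67108864000) (10000000164732338524437/10000000000000000000000)); [lra| |lra].
  apply (up_step (2211/268435456000) (2211/134217728000) (10000000082366168923009/10000000000000000000000)); [lra| |lra].
  apply (up_step (2211/536870912000) (2211/268435456000) (5000000020591542188351/5000000000000000000000)); [lra| |lra].
  apply (up_step (2211/1073741824000) (2211/536870912000) (200000000411830843343/200000000000000000000)); [lra| |lra].
  apply up_base; lra.
  - apply (up_step (228201673/50000000) (228201673/25000000) (95969792395072957010557/1000000000000000000000)); [lra| |lra].
  apply (up_step (228201673/100000000) (228201673/50000000) (4898208662232371583743/500000000000000000000)); [lra| |lra].
  apply (up_step (228201673/200000000) (228201673/100000000) (3129922894332181974093/1000000000000000000000)); [lra| |lra].
  apply (up_step (228201673/400000000) (228201673/200000000) (8845794049055435099771/5000000000000000000000)); [lra| |lra].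
  apply (up_step (228201673/800000000) (228201673/400000000) (6650486466814076263259/5000000000000000000000)); [lra| |lra].
  apply (up_step (228201673/1600000000) (228201673/800000000) (11532984407181062571003/10000000000000000000000)); [lra| |lra].
  apply (up_step (228201673/3200000000) (228201673/1600000000) (10739173342106487560689/10000000000000000000000)); [lra| |lra].
  apply (up_step (228201673/6400000000) (228201673/3200000000) (10362998283366878740597/10000000000000000000000)); [lra| |lra].
  apply (up_step (228201673/12800000000) (228201673/6400000000) (2544970319493785218803/2500000000000000000000)); [lra| |lra].
  apply (up_step (228201673/25600000000) (228201673/12800000000) (10089539770462843502519/10000000000000000000000)); [lra| |lra].
  apply (up_step (228201673/51200000000) (228201673/25600000000) (10044670114275950427749/10000000000000000000000)); [lra| |lra].
  apply (up_step (228201673/102400000000) (228201673/51200000000) (10022310169953806826629/10000000000000000000000)); [lra| |lra].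
  apply (up_step (228201673/204800000000) (228201673/102400000000) (5005574435055832537187/5000000000000000000000)); [lra| |lra].
  apply (up_step (228201673/409600000000) (228201673/204800000000) (10005572882205028980753/10000000000000000000000)); [lra| |lra].
  apply (up_step (228201673/819200000000) (228201673/409600000000) (312587064156185910041/312500000000000000000)); [lra| |lra].
  apply (up_step (228201673/1638400000000) (228201673/819200000000) (10001392929486346863929/10000000000000000000000)); [lra| |lra].
  apply (up_step (228201673/3276800000000) (228201673/1638400000000) (5000348220245852753807/5000000000000000000000)); [lra| |lra].
  apply (up_step (228201673/6553600000000) (228201673/3276800000000) (10000348214183196884833/10000000000000000000000)); [lra| |lra].
  apply (up_step (228201673/13107200000000) (228201673/6553600000000) (10000174105575960863383/10000000000000000000000)); [lra| |lra].
  apply (up_step (228201673/26214400000000) (228201673/13107200000000) (10000087052409074335409/10000000000000000000000)); [lra| |lra].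
  apply (up_step (228201673/52428800000000) (228201673/26214400000000) (500002176305490552797/500000000000000000000)); [lra| |lra].
  apply (up_step (228201673/104857600000000) (228201673/52428800000000) (10000021763031224051567/10000000000000000000000)); [lra| |lra].
  apply (up_step (228201673/209715200000000) (228201673/104857600000000) (16000017410415506661/16000000000000000000)); [lra| |lra].
  apply (up_step (228201673/419430400000000) (228201673/209715200000000) (10000005440753365741703/10000000000000000000000)); [lra| |lra].
  apply (up_step (228201673/838860800000000) (228201673/419430400000000) (10000002720376312848487/10000000000000000000000)); [lra| |lra].
  apply (up_step (228201673/1677721600000000) (228201673/838860800000000) (2000000272037612783733/2000000000000000000000)); [lra| |lra].
  apply (up_step (228201673/3355443200000000) (228201673/1677721600000000) (10000000680094008832939/10000000000000000000000)); [lra| |lra].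
  apply (up_step (228201673/6710886400000000) (228201673/3355443200000000) (10000000340046998634871/10000000000000000000000)); [lra| |lra].
  apply (up_step (228201673/13421772800000000) (228201673/6710886400000000) (2500000042505874468009/2500000000000000000000)); [lra| |lra].
  apply (up_step (228201673/26843545600000000) (228201673/13421772800000000) (2500000021252937143667/2500000000000000000000)); [lra| |lra].
  apply up_base; lra.
Qed.

Lemma lnln_a_2520 : (1029/500) <= ln (ln 2520).
Proof.
  apply (lnln_lb _ (783115387/100000000)).
  - apply (up_step (1029/1000) (1029/500) (5596532343380223099949/2000000000000000000000)); [lra| |lra].
  apply (up_step (1029/2000) (1029/1000) (209100236567675821863/125000000000000000000)); [lra| |lra].
  apply (up_step (1029/4000) (1029/2000) (12933684287709386386497/10000000000000000000000)); [lra| |lra].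
  apply (up_step (1029/8000) (1029/4000) (5686317852465993301813/5000000000000000000000)); [lra| |lra].
  apply (up_step (1029/16000) (1029/8000) (10664256047625632006961/10000000000000000000000)); [lra| |lra].
  apply (up_step (1029/32000) (1029/16000) (10326788488017769024999/10000000000000000000000)); [lra| |lra].
  apply (up_step (1029/64000) (1029/32000) (5081040367881800500043/5000000000000000000000)); [lra| |lra].
  apply (up_step (1029/128000) (1029/64000) (10080714625344574746641/10000000000000000000000)); [lra| |lra].
  apply (up_step (1029/256000) (1029/128000) (627517262752605437071/625000000000000000000)); [lra| |lra].
  apply (up_step (1029/512000) (1029/256000) (10020117865595038494889/10000000000000000000000)); [lra| |lra].
  apply (up_step (1029/1024000) (1029/512000) (10010053878773599535679/10000000000000000000000)); [lra| |lra].
  apply (up_step (1029/2048000) (1029/1024000) (400201027060623112253/400000000000000000000)); [lra| |lra].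
  apply (up_step (1029/4096000) (1029/2048000) (625157032663705830009/625000000000000000000)); [lra| |lra].
  apply (up_step (1029/8192000) (1029/4096000) (625078511400620893041/625000000000000000000)); [lra| |lra].
  apply (up_step (1029/16384000) (1029/8192000) (10000628071481277864599/10000000000000000000000)); [lra| |lra].
  apply (up_step (1029/32768000) (1029/16384000) (10000314030809871454873/10000000000000000000000)); [lra| |lra].
  apply (up_step (1029/65536000) (1029/32768000) (10000157014172263212861/10000000000000000000000)); [lra| |lra].
  apply (up_step (1029/131072000) (1029/65536000) (10000078506777965897101/10000000000000000000000)); [lra| |lra].
  apply (up_step (1029/262144000) (1029/131072000) (1000003925331194182363/1000000000000000000000)); [lra| |lra].
  apply (up_step (1029/524288000) (1029/262144000) (5000009813318355334193/5000000000000000000000)); [lra| |lra].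
  apply (up_step (1029/1048576000) (1029/524288000) (10000009813313540278061/10000000000000000000000)); [lra| |lra].
  apply (up_step (1029/2097152000) (1029/1048576000) (2500001226663891593897/2500000000000000000000)); [lra| |lra].
  apply (up_step (1029/4194304000) (1029/2097152000) (10000002453327482247007/10000000000000000000000)); [lra| |lra].
  apply (up_step (1029/8388608000) (1029/4194304000) (2500000306665916472079/2500000000000000000000)); [lra| |lra].
  apply (up_step (1029/16777216000) (1029/8388608000) (5000000306665907067681/5000000000000000000000)); [lra| |lra].
  apply (up_step (1029/33554432000) (1029/16777216000) (5000000153332951182741/5000000000000000000000)); [lra| |lra].
  apply (up_step (1029/67108864000) (1029/33554432000) (10000000153332950007191/10000000000000000000000)); [lra| |lra].
  apply (up_step (1029/134217728000) (1029/67108864000) (2500000019166618677427/2500000000000000000000)); [lra| |lra].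
  apply (up_step (1029/268435456000) (1029/134217728000) (5000000019166618640691/5000000000000000000000)); [lra| |lra].
  apply (up_step (1029/536870912000) (1029/268435456000) (10000000019166618622323/10000000000000000000000)); [lra| |lra].
  apply up_base; lra.
  - apply (up_step (783115387/200000000) (783115387/100000000) (501780133298581330934099/10000000000000000000000)); [lra| |lra].
  apply (up_step (783115387/400000000) (783115387/200000000) (70836440713701964694799/10000000000000000000000)); [lra| |lra].
  apply (up_step (783115387/800000000) (783115387/400000000) (13307558069918572094459/5000000000000000000000)); [lra| |lra].
  apply (up_step (783115387/1600000000) (783115387/800000000) (2039267490264470866313/1250000000000000000000)); [lra| |lra].
  apply (up_step (783115387/3200000000) (783115387/1600000000) (2554536351052046934289/2000000000000000000000)); [lra| |lra].
  apply (up_step (783115387/6400000000) (783115387/3200000000) (11301628977833343592463/10000000000000000000000)); [lra| |lra].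
  apply (up_step (783115387/12800000000) (783115387/6400000000) (5315455995922020515693/5000000000000000000000)); [lra| |lra].
  apply (up_step (783115387/25600000000) (783115387/12800000000) (644414462656920707311/625000000000000000000)); [lra| |lra].
  apply (up_step (783115387/51200000000) (783115387/25600000000) (2030825586062055829049/2000000000000000000000)); [lra| |lra].
  apply (up_step (783115387/102400000000) (783115387/51200000000) (1259596161121087696547/1250000000000000000000)); [lra| |lra].
  apply (up_step (783115387/204800000000) (783115387/102400000000) (10038311256864224955001/10000000000000000000000)); [lra| |lra].
  apply (up_step (783115387/409600000000) (783115387/204800000000) (10019137316587803386767/10000000000000000000000)); [lra| |lra].
  apply (up_step (783115387/819200000000) (783115387/409600000000) (5004782042354043260331/5000000000000000000000)); [lra| |lra].
  apply (up_step (783115387/1638400000000) (783115387/819200000000) (2000956179900807974779/2000000000000000000000)); [lra| |lra].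
  apply (up_step (783115387/3276800000000) (783115387/1638400000000) (10002390164107796826937/10000000000000000000000)); [lra| |lra].
  apply (up_step (783115387/6553600000000) (783115387/3276800000000) (2000239002130275113683/2000000000000000000000)); [lra| |lra].
  apply (up_step (783115387/13107200000000) (783115387/6553600000000) (10000597487476123577981/10000000000000000000000)); [lra| |lra].
  apply (up_step (783115387/26214400000000) (783115387/13107200000000) (5000149369637902021797/5000000000000000000000)); [lra| |lra].
  apply (up_step (783115387/52428800000000) (783115387/26214400000000) (5000074684261177124141/5000000000000000000000)); [lra| |lra].
  apply (up_step (783115387/104857600000000) (783115387/52428800000000) (10000074683982292263589/10000000000000000000000)); [lra| |lra].
  apply (up_step (783115387/209715200000000) (783115387/104857600000000) (625002333870089073563/625000000000000000000)); [lra| |lra].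
  apply (up_step (783115387/419430400000000) (783115387/209715200000000) (10000018670943282382351/10000000000000000000000)); [lra| |lra].
  apply (up_step (783115387/838860800000000) (783115387/419430400000000) (2000001867093456728741/2000000000000000000000)); [lra| |lra].
  apply (up_step (783115387/1677721600000000) (783115387/838860800000000) (10000004667732552435493/10000000000000000000000)); [lra| |lra].
  apply (up_step (783115387/3355443200000000) (783115387/1677721600000000) (500000116693300193561/500000000000000000000)); [lra| |lra].
  apply (up_step (783115387/6710886400000000) (783115387/3355443200000000) (5000000583466466924493/5000000000000000000000)); [lra| |lra].
  apply (up_step (783115387/13421772800000000) (783115387/6710886400000000) (5000000291733224951419/5000000000000000000000)); [lra| |lra].
  apply (up_step (783115387/26843545600000000) (783115387/13421772800000000) (2000000058346644139201/2000000000000000000000)); [lra| |lra].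
  apply (up_step (783115387/53687091200000000) (783115387/26843545600000000) (10000000145866609284149/10000000000000000000000)); [lra| |lra].
  apply (up_step (783115387/107374182400000000) (783115387/53687091200000000) (10000000072933304376111/10000000000000000000000)); [lra| |lra].
  apply up_base; lra.
Qed.

Lemma lnln_b_2520 : (93/40) <= ln (ln 27720).
Proof.
  apply (lnln_lb _ (1022829477/100000000)).
  - apply (up_step (93/80) (93/40) (31979180901854141153227/10000000000000000000000)); [lra| |lra].
  apply (up_step (93/160) (93/80) (17882723758380360652891/10000000000000000000000)); [lra| |lra].
  apply (up_step (93/320) (93/160) (13372630167016644393599/10000000000000000000000)); [lra| |lra].
  apply (up_step (93/640) (93/320) (11564008892687969735241/10000000000000000000000)); [lra| |lra].
  apply (up_step (93/1280) (93/640) (5376804090881489829149/5000000000000000000000)); [lra| |lra].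
  apply (up_step (93/2560) (93/1280) (10369960550437489325009/10000000000000000000000)); [lra| |lra].
  apply (up_step (93/5120) (93/2560) (10183300324765782593917/10000000000000000000000)); [lra| |lra].
  apply (up_step (93/10240) (93/5120) (2522808495105923437559/2500000000000000000000)); [lra| |lra].
  apply (up_step (93/20480) (93/10240) (10045513416657056931749/10000000000000000000000)); [lra| |lra].
  apply (up_step (93/40960) (93/20480) (2004546174739515141783/2000000000000000000000)); [lra| |lra].
  apply (up_step (93/81920) (93/40960) (5005679492760592165347/5000000000000000000000)); [lra| |lra].
  apply (up_step (93/163840) (93/81920) (10005677880844048204869/10000000000000000000000)); [lra| |lra].
  apply (up_step (93/327680) (93/163840) (10002838537557250906237/10000000000000000000000)); [lra| |lra].
  apply (up_step (93/655360) (93/327680) (20002838336153447907/20000000000000000000)); [lra| |lra].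
  apply (up_step (93/1310720) (93/655360) (5000354779432336427479/5000000000000000000000)); [lra| |lra].
  apply (up_step (93/2621440) (93/1310720) (1250044346642392176851/1250000000000000000000)); [lra| |lra].
  apply (up_step (93/5242880) (93/2621440) (5000088692498148430921/5000000000000000000000)); [lra| |lra].
  apply (up_step (93/10485760) (93/5242880) (10000088692104833957927/10000000000000000000000)); [lra| |lra].
  apply (up_step (93/20971520) (93/10485760) (10000044345954088796761/10000000000000000000000)); [lra| |lra].
  apply (up_step (93/41943040) (93/20971520) (2000004434590492481467/2000000000000000000000)); [lra| |lra].
  apply (up_step (93/83886080) (93/41943040) (10000011086470085712719/10000000000000000000000)); [lra| |lra].
  apply (up_step (93/167772160) (93/83886080) (5000002771616753242237/5000000000000000000000)); [lra| |lra].
  apply (up_step (93/335544320) (93/167772160) (2500000692904092287343/2500000000000000000000)); [lra| |lra].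
  apply (up_step (93/671088640) (93/335544320) (10000001385808088551483/10000000000000000000000)); [lra| |lra].
  apply (up_step (93/1342177280) (93/671088640) (5000000346452010134971/5000000000000000000000)); [lra| |lra].
  apply (up_step (93/2684354560) (93/1342177280) (10000000346452004133521/10000000000000000000000)); [lra| |lra].
  apply (up_step (93/5368709120) (93/2684354560) (5000000086613000283199/5000000000000000000000)); [lra| |lra].
  apply (up_step (93/10737418240) (93/5368709120) (2500000021653249977027/2500000000000000000000)); [lra| |lra].
  apply (up_step (93/21474836480) (93/10737418240) (10000000043306499860281/10000000000000000000000)); [lra| |lra].
  apply (up_step (93/42949672960) (93/21474836480) (10000000021653249906697/10000000000000000000000)); [lra| |lra].
  apply up_base; lra.
  - apply (up_step (1022829477/200000000) (1022829477/100000000) (831794422370150441519021/5000000000000000000000)); [lra| |lra].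
  apply (up_step (1022829477/400000000) (1022829477/200000000) (128980186258987115909827/10000000000000000000000)); [lra| |lra].
  apply (up_step (1022829477/800000000) (1022829477/400000000) (17956905792687886955477/5000000000000000000000)); [lra| |lra].
  apply (up_step (1022829477/1600000000) (1022829477/800000000) (9475469854494785673197/5000000000000000000000)); [lra| |lra].
  apply (up_step (1022829477/3200000000) (1022829477/1600000000) (2753248242275990001791/2000000000000000000000)); [lra| |lra].
  apply (up_step (1022829477/6400000000) (1022829477/3200000000) (5866481315784605396529/5000000000000000000000)); [lra| |lra].
  apply (up_step (1022829477/12800000000) (1022829477/6400000000) (5415940045728259996563/5000000000000000000000)); [lra| |lra].
  apply (up_step (1022829477/25600000000) (1022829477/12800000000) (10407631859100570623491/10000000000000000000000)); [lra| |lra].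
  apply (up_step (1022829477/51200000000) (1022829477/25600000000) (10201780167745514905063/10000000000000000000000)); [lra| |lra].
  apply (up_step (1022829477/102400000000) (1022829477/51200000000) (631274138391997788309/625000000000000000000)); [lra| |lra].
  apply (up_step (1022829477/204800000000) (1022829477/102400000000) (10050067768066026634649/10000000000000000000000)); [lra| |lra].
  apply (up_step (1022829477/409600000000) (1022829477/204800000000) (626562664216500507417/625000000000000000000)); [lra| |lra].
  apply (up_step (1022829477/819200000000) (1022829477/409600000000) (10012493509343218604807/10000000000000000000000)); [lra| |lra].
  apply (up_step (1022829477/1638400000000) (1022829477/819200000000) (15634757507487913481/15625000000000000000)); [lra| |lra].
  apply (up_step (1022829477/3276800000000) (1022829477/1638400000000) (400124876603137778519/400000000000000000000)); [lra| |lra].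
  apply (up_step (1022829477/6553600000000) (1022829477/3276800000000) (10001560835728813614431/10000000000000000000000)); [lra| |lra].
  apply (up_step (1022829477/13107200000000) (1022829477/6553600000000) (1000078038741418099661/1000000000000000000000)); [lra| |lra].
  apply (up_step (1022829477/26214400000000) (1022829477/13107200000000) (10000390186094831068329/10000000000000000000000)); [lra| |lra].
  apply (up_step (1022829477/52428800000000) (1022829477/26214400000000) (10000195091144387803237/10000000000000000000000)); [lra| |lra].
  apply (up_step (1022829477/104857600000000) (1022829477/52428800000000) (2500024386274110402407/2500000000000000000000)); [lra| |lra].
  apply (up_step (1022829477/209715200000000) (1022829477/104857600000000) (312501524138415103497/312500000000000000000)); [lra| |lra].
  apply (up_step (1022829477/419430400000000) (1022829477/209715200000000) (2000004877236981471047/2000000000000000000000)); [lra| |lra].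
  apply (up_step (1022829477/838860800000000) (1022829477/419430400000000) (5000006096542510055751/5000000000000000000000)); [lra| |lra].
  apply (up_step (1022829477/1677721600000000) (1022829477/838860800000000) (2000001219308130333071/2000000000000000000000)); [lra| |lra].
  apply (up_step (1022829477/3355443200000000) (1022829477/1677721600000000) (500000152413493061761/500000000000000000000)); [lra| |lra].
  apply (up_step (1022829477/6710886400000000) (1022829477/3355443200000000) (10000001524134814468263/10000000000000000000000)); [lra| |lra].
  apply (up_step (1022829477/13421772800000000) (1022829477/6710886400000000) (10000000762067378196797/10000000000000000000000)); [lra| |lra].
  apply (up_step (1022829477/26843545600000000) (1022829477/13421772800000000) (2000000076206736367813/2000000000000000000000)); [lra| |lra].
  apply (up_step (1022829477/53687091200000000) (1022829477/26843545600000000) (10000000190516839104699/10000000000000000000000)); [lra| |lra].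
  apply (up_step (1022829477/107374182400000000) (1022829477/53687091200000000) (10000000095258419098641/10000000000000000000000)); [lra| |lra].
  apply up_base; lra.
Qed.

Lemma lnln_a_5040 : (2143/1000) <= ln (ln 5040).
Proof.
  apply (lnln_lb _ (852506779/100000000)).
  - apply (up_step (2143/2000) (2143/1000) (14598779268957661438831/5000000000000000000000)); [lra| |lra].
  apply (up_step (2143/4000) (2143/2000) (683491723875750499963/400000000000000000000)); [lra| |lra].
  apply (up_step (2143/8000) (2143/4000) (261436746437020689137/200000000000000000000)); [lra| |lra].
  apply (up_step (2143/16000) (2143/8000) (11433213599793819323399/10000000000000000000000)); [lra| |lra].
  apply (up_step (2143/32000) (2143/16000) (5346310316422396773229/5000000000000000000000)); [lra| |lra].
  apply (up_step (2143/64000) (2143/32000) (5170256432916261443307/5000000000000000000000)); [lra| |lra].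
  apply (up_step (2143/128000) (2143/64000) (5084415616821790387627/5000000000000000000000)); [lra| |lra].
  apply (up_step (2143/256000) (2143/128000) (2521015573340878428881/2500000000000000000000)); [lra| |lra].
  apply (up_step (2143/512000) (2143/256000) (5020971592571380430993/5000000000000000000000)); [lra| |lra].
  apply (up_step (2143/1024000) (2143/512000) (10020949648183429956489/10000000000000000000000)); [lra| |lra].
  apply (up_step (2143/2048000) (2143/1024000) (1251308667966725518879/1250000000000000000000)); [lra| |lra].
  apply (up_step (2143/4096000) (2143/2048000) (2501308325623538077619/2500000000000000000000)); [lra| |lra].
  apply (up_step (2143/8192000) (2143/4096000) (10002616308993438697827/10000000000000000000000)); [lra| |lra].
  apply (up_step (2143/16384000) (2143/8192000) (10001308068944501170493/10000000000000000000000)); [lra| |lra].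
  apply (up_step (2143/32768000) (2143/16384000) (5000327006542797389393/5000000000000000000000)); [lra| |lra].
  apply (up_step (2143/65536000) (2143/32768000) (10000327001196308270041/10000000000000000000000)); [lra| |lra].
  apply (up_step (2143/131072000) (2143/65536000) (1000016349926155370859/1000000000000000000000)); [lra| |lra].
  apply (up_step (2143/262144000) (2143/131072000) (2500020437324157369831/2500000000000000000000)); [lra| |lra].
  apply (up_step (2143/524288000) (2143/262144000) (10000040874564778237371/10000000000000000000000)); [lra| |lra].
  apply (up_step (2143/1048576000) (2143/524288000) (5000010218630752517897/5000000000000000000000)); [lra| |lra].
  apply (up_step (2143/2097152000) (2143/1048576000) (10000010218625531502509/10000000000000000000000)); [lra| |lra].
  apply (up_step (2143/4194304000) (2143/2097152000) (5000002554655730249037/5000000000000000000000)); [lra| |lra].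
  apply (up_step (2143/8388608000) (2143/4194304000) (400000102186216157433/400000000000000000000)); [lra| |lra].
  apply (up_step (2143/16777216000) (2143/8388608000) (500000063866381019481/500000000000000000000)); [lra| |lra].
  apply (up_step (2143/33554432000) (2143/16777216000) (5000000319331894900119/5000000000000000000000)); [lra| |lra].
  apply (up_step (2143/67108864000) (2143/33554432000) (2500000079832972450369/2500000000000000000000)); [lra| |lra].
  apply (up_step (2143/134217728000) (2143/67108864000) (10000000159665943626077/10000000000000000000000)); [lra| |lra].
  apply (up_step (2143/268435456000) (2143/134217728000) (10000000079832971494373/10000000000000000000000)); [lra| |lra].
  apply (up_step (2143/536870912000) (2143/268435456000) (31250000124739017711/31250000000000000000)); [lra| |lra].
  apply (up_step (2143/1073741824000) (2143/536870912000) (10000000019958242813843/10000000000000000000000)); [lra| |lra].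
  apply up_base; lra.
  - apply (up_step (852506779/200000000) (852506779/100000000) (709896372328080149819009/10000000000000000000000)); [lra| |lra].
  apply (up_step (852506779/400000000) (852506779/200000000) (8425534833635667486089/1000000000000000000000)); [lra| |lra].
  apply (up_step (852506779/800000000) (852506779/400000000) (14513385919243368867561/5000000000000000000000)); [lra| |lra].
  apply (up_step (852506779/1600000000) (852506779/800000000) (4259311258766399556689/2500000000000000000000)); [lra| |lra].
  apply (up_step (852506779/3200000000) (852506779/1600000000) (13052679814913716876941/10000000000000000000000)); [lra| |lra].
  apply (up_step (852506779/6400000000) (852506779/3200000000) (1428104065213830368509/1250000000000000000000)); [lra| |lra].
  apply (up_step (852506779/12800000000) (852506779/6400000000) (2672175204972374531771/2500000000000000000000)); [lra| |lra].
  apply (up_step (852506779/25600000000) (852506779/12800000000) (2067723465059048763039/2000000000000000000000)); [lra| |lra].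
  apply (up_step (852506779/51200000000) (852506779/25600000000) (10167899156313089543777/10000000000000000000000)); [lra| |lra].
  apply (up_step (852506779/102400000000) (852506779/51200000000) (10083600129077456403307/10000000000000000000000)); [lra| |lra].
  apply (up_step (852506779/204800000000) (852506779/102400000000) (156901766649169724373/156250000000000000000)); [lra| |lra].
  apply (up_step (852506779/409600000000) (852506779/204800000000) (2004166965653995840741/2000000000000000000000)); [lra| |lra].
  apply (up_step (852506779/819200000000) (852506779/409600000000) (2002082398730879328411/2000000000000000000000)); [lra| |lra].
  apply (up_step (852506779/1638400000000) (852506779/819200000000) (2001040928482413289397/2000000000000000000000)); [lra| |lra].
  apply (up_step (852506779/3276800000000) (852506779/1638400000000) (1250325247836292147847/1250000000000000000000)); [lra| |lra].
  apply (up_step (852506779/6553600000000) (852506779/3276800000000) (1000130090672725294079/1000000000000000000000)); [lra| |lra].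
  apply (up_step (852506779/13107200000000) (852506779/6553600000000) (5000325216105261723037/5000000000000000000000)); [lra| |lra].
  apply (up_step (852506779/26214400000000) (852506779/13107200000000) (1000032521081715794321/1000000000000000000000)); [lra| |lra].
  apply (up_step (852506779/52428800000000) (852506779/26214400000000) (2500040651021643630767/2500000000000000000000)); [lra| |lra].
  apply (up_step (852506779/104857600000000) (852506779/52428800000000) (5000040650856394418207/5000000000000000000000)); [lra| |lra].
  apply (up_step (852506779/209715200000000) (852506779/104857600000000) (10000040650773770147801/10000000000000000000000)); [lra| |lra].
  apply (up_step (852506779/419430400000000) (852506779/209715200000000) (10000020325366229048283/10000000000000000000000)); [lra| |lra].
  apply (up_step (852506779/838860800000000) (852506779/419430400000000) (2000002032535590104597/2000000000000000000000)); [lra| |lra].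
  apply (up_step (852506779/1677721600000000) (852506779/838860800000000) (10000005081337684261859/10000000000000000000000)); [lra| |lra].
  apply (up_step (852506779/3355443200000000) (852506779/1677721600000000) (10000002540668519381103/10000000000000000000000)); [lra| |lra].
  apply (up_step (852506779/6710886400000000) (852506779/3355443200000000) (2000000254066835800621/2000000000000000000000)); [lra| |lra].
  apply (up_step (852506779/13421772800000000) (852506779/6710886400000000) (2500000158791767332423/2500000000000000000000)); [lra| |lra].
  apply (up_step (852506779/26843545600000000) (852506779/13421772800000000) (10000000317583529621881/10000000000000000000000)); [lra| |lra].
  apply (up_step (852506779/53687091200000000) (852506779/26843545600000000) (10000000158791763550199/10000000000000000000000)); [lra| |lra].
  apply (up_step (852506779/107374182400000000) (852506779/53687091200000000) (5000000039697940729957/5000000000000000000000)); [lra| |lra].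
  apply up_base; lra.
Qed.

Lemma lnln_b_5040 : (239/100) <= ln (ln 55440).
Proof.
  apply (lnln_lb _ (1091827529/100000000)).
  - apply (up_step (239/200) (239/100) (33035577748954340246339/10000000000000000000000)); [lra| |lra].
  apply (up_step (239/400) (239/200) (18175691939773390714261/10000000000000000000000)); [lra| |lra].
  apply (up_step (239/800) (239/400) (674086269326363573169/500000000000000000000)); [lra| |lra].
  apply (up_step (239/1600) (239/800) (362846351060342599919/312500000000000000000)); [lra| |lra].
  apply (up_step (239/3200) (239/1600) (538773682401315960877/500000000000000000000)); [lra| |lra].
  apply (up_step (239/6400) (239/3200) (10380497891732515167073/10000000000000000000000)); [lra| |lra].
  apply (up_step (239/12800) (239/6400) (2547118211299354276481/2500000000000000000000)); [lra| |lra].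
  apply (up_step (239/25600) (239/12800) (2523449133279366440101/2500000000000000000000)); [lra| |lra].
  apply (up_step (239/51200) (239/25600) (5023394403468004064043/5000000000000000000000)); [lra| |lra].
  apply (up_step (239/102400) (239/51200) (5011683551197144402581/5000000000000000000000)); [lra| |lra].
  apply (up_step (239/204800) (239/102400) (5005838366945712921967/5000000000000000000000)); [lra| |lra].
  apply (up_step (239/409600) (239/204800) (10005836663613606002353/10000000000000000000000)); [lra| |lra].
  apply (up_step (239/819200) (239/409600) (5001458953049001581487/5000000000000000000000)); [lra| |lra].
  apply (up_step (239/1638400) (239/819200) (2000291769327465203923/2000000000000000000000)); [lra| |lra].
  apply (up_step (239/3276800) (239/1638400) (10000729396717684421367/10000000000000000000000)); [lra| |lra].
  apply (up_step (239/6553600) (239/3276800) (1250045586463605010731/1250000000000000000000)); [lra| |lra].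
  apply (up_step (239/13107200) (239/6553600) (625011396511996864127/625000000000000000000)); [lra| |lra].
  apply (up_step (239/26214400) (239/13107200) (5000045585840180574011/5000000000000000000000)); [lra| |lra].
  apply (up_step (239/52428800) (239/26214400) (2500011396434069401603/2500000000000000000000)); [lra| |lra].
  apply (up_step (239/104857600) (239/52428800) (78125178069079399379/78125000000000000000)); [lra| |lra].
  apply (up_step (239/209715200) (239/104857600) (10000011396414587646983/10000000000000000000000)); [lra| |lra].
  apply (up_step (239/419430400) (239/209715200) (5000002849102835173049/5000000000000000000000)); [lra| |lra].
  apply (up_step (239/838860800) (239/419430400) (1250000356137803662977/1250000000000000000000)); [lra| |lra].
  apply (up_step (239/1677721600) (239/838860800) (5000000712275556592307/5000000000000000000000)); [lra| |lra].
  apply (up_step (239/3355443200) (239/1677721600) (2000000142455106245097/2000000000000000000000)); [lra| |lra].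
  apply (up_step (239/6710886400) (239/3355443200) (10000000356137759271037/10000000000000000000000)); [lra| |lra].
  apply (up_step (239/13421772800) (239/6710886400) (2500000044517219512523/2500000000000000000000)); [lra| |lra].
  apply (up_step (239/26843545600) (239/13421772800) (10000000089034438628689/10000000000000000000000)); [lra| |lra].
  apply (up_step (239/53687091200) (239/26843545600) (2000000008903443843051/2000000000000000000000)); [lra| |lra].
  apply (up_step (239/107374182400) (239/53687091200) (2000000004451721916571/2000000000000000000000)); [lra| |lra].
  apply up_base; lra.
  - apply (up_step (1091827529/200000000) (1091827529/100000000) (2348947808361673173969103/10000000000000000000000)); [lra| |lra].
  apply (up_step (1091827529/400000000) (1091827529/200000000) (153262774618028926442801/10000000000000000000000)); [lra| |lra].
  apply (up_step (1091827529/800000000) (1091827529/400000000) (39148789843113787677917/10000000000000000000000)); [lra| |lra].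
  apply (up_step (1091827529/1600000000) (1091827529/800000000) (3957210625838042888539/2000000000000000000000)); [lra| |lra].
  apply (up_step (1091827529/3200000000) (1091827529/1600000000) (14066290601715227766729/10000000000000000000000)); [lra| |lra].
  apply (up_step (1091827529/6400000000) (1091827529/3200000000) (11860139375958120571891/10000000000000000000000)); [lra| |lra].
  apply (up_step (1091827529/12800000000) (1091827529/6400000000) (348493654475675001/320000000000000000)); [lra| |lra].
  apply (up_step (1091827529/25600000000) (1091827529/12800000000) (652232545233007144063/625000000000000000000)); [lra| |lra].
  apply (up_step (1091827529/51200000000) (1091827529/25600000000) (2553884385075031434053/2500000000000000000000)); [lra| |lra].
  apply (up_step (1091827529/102400000000) (1091827529/51200000000) (10107194239896711184711/10000000000000000000000)); [lra| |lra].
  apply (up_step (1091827529/204800000000) (1091827529/102400000000) (10053454252095003781547/10000000000000000000000)); [lra| |lra].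
  apply (up_step (1091827529/409600000000) (1091827529/204800000000) (5013345752113802638627/5000000000000000000000)); [lra| |lra].
  apply (up_step (1091827529/819200000000) (1091827529/409600000000) (10013336858524038128203/10000000000000000000000)); [lra| |lra].
  apply (up_step (1091827529/1638400000000) (1091827529/819200000000) (2501666551836500017709/2500000000000000000000)); [lra| |lra].
  apply (up_step (1091827529/3276800000000) (1091827529/1638400000000) (2500833137094766273737/2500000000000000000000)); [lra| |lra].
  apply (up_step (1091827529/6553600000000) (1091827529/3276800000000) (400066645415567031771/400000000000000000000)); [lra| |lra].
  apply (up_step (1091827529/13107200000000) (1091827529/6553600000000) (10000833032997389160179/10000000000000000000000)); [lra| |lra].
  apply (up_step (1091827529/26214400000000) (1091827529/13107200000000) (10000416507824756175933/10000000000000000000000)); [lra| |lra].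
  apply (up_step (1091827529/52428800000000) (1091827529/26214400000000) (2500052062935984661323/2500000000000000000000)); [lra| |lra].
  apply (up_step (1091827529/104857600000000) (1091827529/52428800000000) (1000010412532986510667/1000000000000000000000)); [lra| |lra].
  apply (up_step (1091827529/209715200000000) (1091827529/104857600000000) (10000052062529407204921/10000000000000000000000)); [lra| |lra].
  apply (up_step (1091827529/419430400000000) (1091827529/209715200000000) (5000013015615411176777/5000000000000000000000)); [lra| |lra].
  apply (up_step (1091827529/838860800000000) (1091827529/419430400000000) (400000520624277635023/400000000000000000000)); [lra| |lra].
  apply (up_step (1091827529/1677721600000000) (1091827529/838860800000000) (2000001301560270572773/2000000000000000000000)); [lra| |lra].
  apply (up_step (1091827529/3355443200000000) (1091827529/1677721600000000) (312500101684379594957/312500000000000000000)); [lra| |lra].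
  apply (up_step (1091827529/6710886400000000) (1091827529/3355443200000000) (5000000813474970585503/5000000000000000000000)); [lra| |lra].
  apply (up_step (1091827529/13421772800000000) (1091827529/6710886400000000) (10000000813474937498429/10000000000000000000000)); [lra| |lra].
  apply (up_step (1091827529/26843545600000000) (1091827529/13421772800000000) (5000000203368730238723/5000000000000000000000)); [lra| |lra].
  apply (up_step (1091827529/53687091200000000) (1091827529/26843545600000000) (10000000203368728170781/10000000000000000000000)); [lra| |lra].
  apply (up_step (1091827529/107374182400000000) (1091827529/53687091200000000) (2000000020336872713681/2000000000000000000000)); [lra| |lra].
  apply up_base; lra.
Qed.

Lemma ln_pos' x : 1 < x -> 0 < ln x.
Proof. intros. rewrite <- ln_1. apply ln_increasing; lra. Qed.

Lemma lnln_mono a b : 3 <= a -> a <= b -> ln (ln a) <= ln (ln b).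
Proof.
  intros. apply ln_le'. apply ln_pos'; lra. apply ln_le'; lra.
Qed.

Lemma ln_succ_le m : 0 < m -> ln (m + 1) <= ln m + / m.
Proof.
  intros Hm. apply ln_ub. lra. rewrite exp_plus, exp_ln by lra.
  pose proof (exp_ineq1_le (/ m)).
  assert (m * (1 + / m) = m + 1) by (field; lra). nra.
Qed.

Definition cseq n := sum_f_R0 hf n - ln (INR (S (S n))).

Lemma cseq_mono n : cseq n <= cseq (S n).
Proof.
  unfold cseq. change (sum_f_R0 hf (S n)) with (sum_f_R0 hf n + hf (S n)). change (hf (S n)) with (/ INR (S (S n))).
  rewrite (S_INR (S (S n))).
  assert (Hm : 0 < INR (S (S n))) by (apply lt_0_INR; lia).
  pose proof (ln_succ_le _ Hm). lra.
Qed.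

Lemma cseq_ge n : (39 <= n)%nat -> cseq 39 <= cseq n.
Proof.
  induction 1. lra. pose proof (cseq_mono m). lra.
Qed.

Lemma harm_ge n : cseq n <= harm_minus_log n.
Proof.
  unfold cseq, harm_minus_log. change (fun k => / INR (S k)) with hf.
  assert (ln (INR (S n)) <= ln (INR (S (S n)))).
  { apply ln_le'. rewrite S_INR; pose proof (pos_INR n); lra. rewrite (S_INR (S n)); lra. }
  lra.
Qed.

Lemma c39 : 563/1000 <= cseq 39.
Proof.
  unfold cseq. pose proof H40. pose proof exp_41.
  assert (ln (INR 41) <= 185679/50000).
  { apply ln_ub. rewrite INR_IZR_INZ; simpl Z.of_nat; lra. rewrite INR_IZR_INZ; simpl Z.of_nat. lra. }
  lra.
Qed.

Lemma gamma_lb gamma : Un_cv harm_minus_log gamma -> 351/200 <= exp gamma.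
Proof.
  intros H.
  assert (563/1000 <= gamma).
  { destruct (Rle_or_lt (563/1000) gamma) as [|Hlt]; auto.
    destruct (H (563/1000 - gamma)) as [N HN]. lra.
    specialize (HN (Nat.max N 39) (Nat.le_max_l _ _)).
    pose proof (cseq_ge (Nat.max N 39) (Nat.le_max_r _ _)).
    pose proof (harm_ge (Nat.max N 39)). pose proof c39.
    unfold R_dist in HN. apply Rabs_def2 in HN. lra. }
  pose proof exp_g.
  destruct (Rle_lt_or_eq_dec _ _ H0) as [Hl|Hl].
  pose proof (exp_increasing _ _ Hl). lra. rewrite <- Hl. lra.
Qed.


Lemma Zlt_R a b : (a < b)%Z -> IZR a < IZR b.
Proof. apply IZR_lt. Qed.

Lemma key r p t (dn en : Z) : (3 <= t)%nat -> (t <= r)%nat -> (11 <= p)%nat -> prime (Z.of_nat p) ->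
  (0 < dn)%Z -> (0 < en)%Z ->
  IZR dn / 1000 <= ln (ln (INR t)) -> IZR en / 1000 <= ln (ln (INR (11 * t))) ->
  ((Z.of_nat (Defs.sigma r) * 1000000 < (1755 * dn) * Z.of_nat r)%Z \/
   (12 * Z.of_nat (Defs.sigma r) * 1000000 < (11 * 1755 * en) * Z.of_nat r)%Z) ->
  351/200 <= G r -> G (p * r) < 351/200.
Proof.
  intros Ht Htr Hp11 Hp Hdn Hen Hd He Hc HG.
  assert (HtR : 3 <= INR t) by (replace 3 with (INR 3) by (simpl; lra); apply le_INR; auto).
  assert (HrR : INR t <= INR r) by (apply le_INR; auto).
  assert (Hdn' : 0 < IZR dn) by (apply IZR_lt; auto).
  assert (Hen' : 0 < IZR en) by (apply IZR_lt; auto).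
  destruct Hc as [Hc|Hc].
  - exfalso.
    apply Zlt_R in Hc. rewrite !mult_IZR, <- !INR_IZR_INZ in Hc.
    set (s := INR (Defs.sigma r)) in *. set (R0 := INR r) in *.
    set (L := ln (ln R0)).
    assert (HL : IZR dn / 1000 <= L) by (unfold L; eapply Rle_trans; [apply Hd|apply lnln_mono; lra]).
    assert (HGe : G r * (R0 * L) = s).
    { unfold G. fold s R0 L. field. split; lra. }
    assert (0 < R0 * L) by nra.
    assert (351/200 * (R0 * L) <= G r * (R0 * L)) by (apply Rmult_le_compat_r; lra).
    assert (351/200 * (R0 * (IZR dn / 1000)) <= 351/200 * (R0 * L)) by nra.
    nra.
  - apply Zlt_R in Hc. rewrite !mult_IZR, <- !INR_IZR_INZ in Hc.
    set (s := INR (Defs.sigma r)) in *. set (R0 := INR r) in *.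
    pose proof (sigma_pr p r Hp ltac:(lia)) as Hs.
    apply le_INR in Hs. rewrite mult_INR, plus_INR in Hs. simpl (INR 1) in Hs.
    fold s in Hs.
    set (s' := INR (Defs.sigma (p * r))) in *.
    set (P := INR p) in *.
    assert (HP : 11 <= P) by (unfold P; replace 11 with (INR 11) by (rewrite INR_IZR_INZ; simpl; lra); apply le_INR; auto).
    assert (Hpr : INR (11 * t) <= INR (p * r)) by (apply le_INR; nia).
    rewrite !mult_INR in Hpr. rewrite (mult_INR 11 t) in He.
    fold P R0 in Hpr.
    replace (INR 11) with 11 in * by (rewrite INR_IZR_INZ; simpl; lra).
    set (L := ln (ln (P * R0))).
    assert (HL : IZR en / 1000 <= L) by (unfold L; eapply Rle_trans; [apply He|apply lnln_mono; lra]).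
    assert (HGe : G (p * r) * (P * R0 * L) = s').
    { unfold G. rewrite mult_INR. fold s' P R0 L. field. split; [|split]; nra. }
    assert (Hs0 : 0 <= s) by (apply pos_INR).
    assert (HPR : 0 < P * R0) by nra.
    assert (0 < P * R0 * L) by nra.
    destruct (Rlt_or_le (G (p * r)) (351/200)) as [|HH]; auto. exfalso.
    assert (351/200 * (P * R0 * L) <= s') by (rewrite <- HGe; apply Rmult_le_compat_r; lra).
    assert (351/200 * (P * R0 * (IZR en / 1000)) <= 351/200 * (P * R0 * L)) by nra.
    assert ((P + 1) * (12 * s * 1000000) < (P + 1) * (11 * 1755 * IZR en * R0)) by nra.
    nra.
Qed.


Lemma G2_neg : G 2 <= 0.
Proof.
  unfold G.
  assert (H2 : INR 2 = 2) by (simpl; lra). rewrite H2.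
  assert (Hl2 : 0 < ln 2) by (apply ln_pos'; lra).
  assert (Hl2' : ln 2 < 1).
  { pose proof (exp_ineq1 1 ltac:(lra)). rewrite <- (ln_exp 1). apply ln_increasing; lra. }
  assert (Hll : ln (ln 2) < 0) by (rewrite <- ln_1; apply ln_increasing; lra).
  pose proof (pos_INR (Defs.sigma 2)).
  assert (/ (2 * ln (ln 2)) < 0) by (apply Rinv_lt_0_compat; lra).
  unfold Rdiv. nra.
Qed.

Theorem lemma3 (gamma : R) (Hgamma : Un_cv harm_minus_log gamma) :
  forall r p : nat,
    (1 < r <= 5040)%nat ->
    G r >= exp gamma ->
    prime (Z.of_nat p) ->
    (11 <= p)%nat ->
    G (p * r) < exp gamma.
Proof.
  intros r p [Hr1 Hr2] HG Hp Hp11.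
  pose proof (gamma_lb _ Hgamma) as Hg.
  assert (HG' : 351/200 <= G r) by lra.
  destruct (Nat.eq_dec r 2) as [->|Hr3].
  { exfalso. pose proof G2_neg. lra. }
  destruct chk_all as (C1&C2&C3&C4&C5&C6&C7&C8).
  assert (Hlt : G (p * r) < 351/200); [|lra].
  Ltac fin t dn en C len lem1 lem2 f fs T11 T :=
    apply (key _ _ t dn en); try lia; try assumption; try (apply Nat.leb_le; reflexivity);
    [ replace (INR t) with T by (rewrite INR_IZR_INZ; f_equal; vm_compute; reflexivity); pose proof lem1; lra
    | replace (INR (11 * t)) with T11 by (rewrite INR_IZR_INZ; f_equal; vm_compute; reflexivity); pose proof lem2; lra
    | apply (chk_spec f fs len (Z.of_nat t)); [exact C | lia] ].
  destruct (Nat.lt_ge_cases r 12).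
  { fin 3%nat 94%Z 1251%Z C1 9%nat lnln_a_3 lnln_b_3 sigZ sigZ_spec 33 3. }
  destruct (Nat.lt_ge_cases r 48).
  { fin 12%nat 910%Z 1585%Z C2 36%nat lnln_a_12 lnln_b_12 sigZ sigZ_spec 132 12. }
  destruct (Nat.lt_ge_cases r 120).
  { fin 48%nat 1353%Z 1835%Z C3 72%nat lnln_a_48 lnln_b_48 ubZ ubZ_spec 528 48. }
  destruct (Nat.lt_ge_cases r 360).
  { fin 120%nat 1566%Z 1972%Z C4 240%nat lnln_a_120 lnln_b_120 ubZ ubZ_spec 1320 120. }
  destruct (Nat.lt_ge_cases r 840).
  { fin 360%nat 1772%Z 2114%Z C5 480%nat lnln_a_360 lnln_b_360 ubZ ubZ_spec 3960 360. }
  destruct (Nat.lt_ge_cases r 2520).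
  { fin 840%nat 1907%Z 2211%Z C6 1680%nat lnln_a_840 lnln_b_840 ubZ ubZ_spec 9240 840. }
  change (5040%nat) with (2520*2)%nat in Hr2.
  destruct (Nat.lt_ge_cases r (2520*2)).
  { fin 2520%nat 2058%Z 2325%Z C7 2520%nat lnln_a_2520 lnln_b_2520 ubZ ubZ_spec 27720 2520. }
  { fin (2520*2)%nat 2143%Z 2390%Z C8 1%nat lnln_a_5040 lnln_b_5040 ubZ ubZ_spec 55440 5040. }
Qed.
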